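(* Let $\alpha>-1$. For $z\in\mathbb{C}\setminus[0,\infty)$, as $n\to\infty$, $$\frac{L_n^{(\alpha)}(z)}{L_n^{(\alpha+1)}(z)}=\sqrt{\frac{-z}{n}}+\left(\frac{\alpha}{2}+\frac14+\frac z2\right)\frac1n+\mathcal{O}(n^{-3/2}),$$ uniformly on compact subsets of $\mathbb{C}\setminus[0,\infty)$.
   Context: $L_n^{(\alpha)}(z)=\binom{n+\alpha}{n}\,{}_1F_1(-n;\alpha+1;z)$ is the classical Laguerre polynomial. $\sqrt{-z}$ is the principal branch on $\mathbb{C}\setminus[0,\infty)$. *)

(* Defs.v *)
From Stdlib Require Import Reals Factorial List.
Open Scope R_scope.

Definition Cpx : Type := (R * R)%type.
Definition Cre (z : Cpx) : R := fst z.
Definition Cim (z : Cpx) : R := snd z.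
Definition RtoC (x : R) : Cpx := (x, 0).
Definition Cadd (z w : Cpx) : Cpx := (fst z + fst w, snd z + snd w).
Definition Copp (z : Cpx) : Cpx := (- fst z, - snd z).
Definition Csub (z w : Cpx) : Cpx := Cadd z (Copp w).
Definition Cmul (z w : Cpx) : Cpx :=
  (fst z * fst w - snd z * snd w, fst z * snd w + snd z * fst w).
Definition Cscal (a : R) (z : Cpx) : Cpx := (a * fst z, a * snd z).
Definition Cinv (z : Cpx) : Cpx :=
  let d := fst z * fst z + snd z * snd z in (fst z / d, - snd z / d).
Definition Cdiv (z w : Cpx) : Cpx := Cmul z (Cinv w).
Definition Cnorm (z : Cpx) : R := sqrt (fst z * fst z + snd z * snd z).
Fixpoint Cpow (z : Cpx) (k : nat) : Cpx :=
  match k with O => (1, 0) | S k' => Cmul z (Cpow z k') end.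

(** Principal square root (branch cut along (-oo,0]). *)
Definition Csqrt (w : Cpx) : Cpx :=
  let r := Cnorm w in
  (sqrt ((r + fst w) / 2),
   (if Rle_dec 0 (snd w) then 1 else -1) * sqrt ((r - fst w) / 2)).

Fixpoint poch (a : R) (k : nat) : R :=
  match k with O => 1 | S k' => poch a k' * (a + INR k') end.

(** Generalized binomial coefficient binom(n+alpha, n) = (alpha+1)_n / n!. *)
Definition binom_na (n : nat) (alpha : R) : R := poch (alpha + 1) n / INR (fact n).

Fixpoint hyp1F1_sum (n : nat) (b : R) (z : Cpx) (m : nat) : Cpx :=
  let term := fun k => Cscal (poch (- INR n) k / (poch b k * INR (fact k))) (Cpow z k) in
  match m with
  | O => term O
  | S m' => Cadd (hyp1F1_sum n b z m') (term m)
  end.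
Definition hyp1F1_neg (n : nat) (b : R) (z : Cpx) : Cpx := hyp1F1_sum n b z n.

Definition Laguerre (n : nat) (alpha : R) (z : Cpx) : Cpx :=
  Cscal (binom_na n alpha) (hyp1F1_neg n (alpha + 1) z).

Definition Copen (U : Cpx -> Prop) : Prop :=
  forall z, U z -> exists eps, 0 < eps /\ forall w, Cnorm (Csub w z) < eps -> U w.

Definition Ccompact (K : Cpx -> Prop) : Prop :=
  forall (I : Type) (U : I -> Cpx -> Prop),
    (forall i, Copen (U i)) ->
    (forall z, K z -> exists i, U i z) ->
    exists l : list I, forall z, K z -> exists i, List.In i l /\ U i z.

Definition slit_plane (z : Cpx) : Prop := ~ (snd z = 0 /\ 0 <= fst z).

(* Main.v *)
Require Import Defs.
From Stdlib Require Import Reals.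
Open Scope R_scope.
From Stdlib Require Import Lra Psatz ZArith Lia List.
From Coquelicot Require Complex.
Open Scope R_scope.

Ltac cunf := unfold Csub, Cdiv, Cadd, Copp, Cmul, Cscal, Cinv, RtoC, Cre, Cim in *; simpl in *.
Ltac ceq := apply injective_projections; cunf.

Lemma Cnorm_Cmod z : Cnorm z = Coquelicot.Complex.Cmod z.
Proof. unfold Cnorm, Coquelicot.Complex.Cmod. f_equal. simpl. ring. Qed.

Lemma Cnorm_ge0 z : 0 <= Cnorm z.
Proof. unfold Cnorm. apply sqrt_pos. Qed.

Lemma Cnorm_add_le a b : Cnorm (Cadd a b) <= Cnorm a + Cnorm b.
Proof. rewrite !Cnorm_Cmod. exact (Coquelicot.Complex.Cmod_triangle a b). Qed.

Lemma Cnorm_mul a b : Cnorm (Cmul a b) = Cnorm a * Cnorm b.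
Proof. rewrite !Cnorm_Cmod. exact (Coquelicot.Complex.Cmod_mult a b). Qed.

Lemma Cnorm_opp a : Cnorm (Copp a) = Cnorm a.
Proof. rewrite !Cnorm_Cmod. exact (Coquelicot.Complex.Cmod_opp a). Qed.

Lemma Cnorm_RtoC x : Cnorm (RtoC x) = Rabs x.
Proof. rewrite !Cnorm_Cmod. exact (Coquelicot.Complex.Cmod_R x). Qed.

Lemma Cscal_mul a z : Cscal a z = Cmul (RtoC a) z.
Proof. ceq; ring. Qed.

Lemma Cnorm_scal a z : Cnorm (Cscal a z) = Rabs a * Cnorm z.
Proof. rewrite Cscal_mul, Cnorm_mul, Cnorm_RtoC. reflexivity. Qed.

Lemma Cnorm_sub_le a b : Cnorm (Csub a b) <= Cnorm a + Cnorm b.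
Proof. unfold Csub. rewrite <- (Cnorm_opp b). apply Cnorm_add_le. Qed.

Lemma Cnorm_sq z : Cnorm z * Cnorm z = fst z * fst z + snd z * snd z.
Proof. unfold Cnorm. rewrite sqrt_sqrt; nra. Qed.

Lemma fst_le_Cnorm z : Rabs (fst z) <= Cnorm z.
Proof. rewrite Cnorm_Cmod. apply Coquelicot.Complex.re_le_Cmod. Qed.

Lemma snd_le_Cnorm z : Rabs (snd z) <= Cnorm z.
Proof.
  unfold Cnorm. rewrite <- sqrt_Rsqr_abs. apply sqrt_le_1_alt. unfold Rsqr. nra.
Qed.

Lemma Cnorm_le_sq z B : 0 <= B -> fst z * fst z + snd z * snd z <= B * B -> Cnorm z <= B.
Proof. intros HB H. unfold Cnorm. rewrite <- (sqrt_square B HB). apply sqrt_le_1_alt. lra. Qed.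

Lemma Cnorm_nz z : z <> (0,0) -> 0 < fst z * fst z + snd z * snd z.
Proof.
  intros H. destruct z as [x y]; simpl.
  destruct (Req_dec x 0); destruct (Req_dec y 0); subst; try (exfalso; apply H; reflexivity); nra.
Qed.

Lemma Cnorm_pos z : z <> (0,0) -> 0 < Cnorm z.
Proof. intros H. unfold Cnorm. apply sqrt_lt_R0. apply Cnorm_nz; auto. Qed.

Lemma Cnorm_sub_rev a b : Cnorm a - Cnorm b <= Cnorm (Csub a b).
Proof.
  assert (a = Cadd (Csub a b) b) as E.
  { ceq; ring. }
  pose proof (Cnorm_add_le (Csub a b) b). rewrite <- E in H. lra.
Qed.

Lemma Cnorm_add_rev a b : Cnorm a - Cnorm b <= Cnorm (Cadd a b).
Proof.
  pose proof (Cnorm_sub_rev a (Copp b)).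
  assert (Csub a (Copp b) = Cadd a b) as E.
  { ceq; ring. }
  rewrite E, Cnorm_opp in H. exact H.
Qed.

Lemma bnd_add a b A B : Cnorm a <= A -> Cnorm b <= B -> Cnorm (Cadd a b) <= A + B.
Proof. intros; pose proof (Cnorm_add_le a b); lra. Qed.
Lemma bnd_sub a b A B : Cnorm a <= A -> Cnorm b <= B -> Cnorm (Csub a b) <= A + B.
Proof. intros; pose proof (Cnorm_sub_le a b); lra. Qed.
Lemma bnd_mul a b A B : Cnorm a <= A -> Cnorm b <= B -> Cnorm (Cmul a b) <= A * B.
Proof. intros; rewrite Cnorm_mul. apply Rmult_le_compat; auto using Cnorm_ge0. Qed.
Lemma bnd_opp a A : Cnorm a <= A -> Cnorm (Copp a) <= A.
Proof. intros; rewrite Cnorm_opp; auto. Qed.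
Lemma bnd_scal x a A : Cnorm a <= A -> Cnorm (Cscal x a) <= Rabs x * A.
Proof. intros; rewrite Cnorm_scal. apply Rmult_le_compat_l; auto using Rabs_pos. Qed.
Lemma bnd_R x : Cnorm (RtoC x) <= Rabs x.
Proof. rewrite Cnorm_RtoC; lra. Qed.

Ltac bnd := first
  [ eassumption
  | eapply bnd_add; [bnd | bnd]
  | eapply bnd_sub; [bnd | bnd]
  | eapply bnd_mul; [bnd | bnd]
  | eapply bnd_opp; bnd
  | eapply bnd_scal; bnd
  | apply bnd_R ].

Lemma Rabs_le_inv x a : Rabs x <= a -> -a <= x <= a.
Proof. intros H. pose proof (Rle_abs x). pose proof (Rle_abs (-x)). rewrite Rabs_Ropp in H1. lra. Qed.

Lemma nat_arch x : exists n : nat, x < INR n.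
Proof.
  destruct (archimed x) as [H1 _].
  destruct (Z_lt_le_dec (up x) 0) as [Hz|Hz].
  - exists 0%nat. simpl. apply IZR_lt in Hz. lra.
  - exists (Z.to_nat (up x)). rewrite INR_IZR_INZ, Z2Nat.id by lia. lra.
Qed.

Lemma Cnorm_ge_abs_fst v : Rabs (fst v) <= Cnorm v.
Proof. apply fst_le_Cnorm. Qed.

Lemma Csqrt_sq v : Cmul (Csqrt v) (Csqrt v) = v.
Proof.
  destruct v as [x y]. unfold Csqrt. set (a := Cnorm (x,y)).
  assert (Ha : Rabs x <= a) by (apply (fst_le_Cnorm (x,y))).
  assert (Ha2 : a * a = x*x + y*y) by (apply (Cnorm_sq (x,y))).
  simpl. assert (H1: 0 <= (a + x)/2) by (pose proof (Rabs_le_inv _ _ Ha) as [? ?]; lra).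
  assert (H2: 0 <= (a - x)/2) by (pose proof (Rabs_le_inv _ _ Ha) as [? ?]; lra).
  assert (Hm : sqrt ((a+x)/2) * sqrt ((a-x)/2) = Rabs y / 2).
  { rewrite <- sqrt_mult_alt by lra.
    replace ((a + x) / 2 * ((a - x) / 2)) with (Rsqr (Rabs y / 2)).
    - apply sqrt_Rsqr. pose proof (Rabs_pos y); lra.
    - unfold Rsqr. replace (Rabs y / 2 * (Rabs y / 2)) with ((Rabs y * Rabs y)/4) by field.
      rewrite <- Rabs_mult, Rabs_right by nra. nra. }
  unfold Cmul; simpl. apply injective_projections; simpl.
  - destruct (Rle_dec 0 y).
    + rewrite Rmult_1_l. rewrite !sqrt_sqrt by lra. lra.
    + replace (-1 * sqrt ((a - x) / 2) * (-1 * sqrt ((a - x) / 2))) with (sqrt ((a - x) / 2) * sqrt ((a - x) / 2)) by ring.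
      rewrite !sqrt_sqrt by lra. lra.
  - destruct (Rle_dec 0 y).
    + replace (sqrt ((a + x) / 2) * (1 * sqrt ((a - x) / 2)) + 1 * sqrt ((a - x) / 2) * sqrt ((a + x) / 2))
        with (2 * (sqrt ((a+x)/2) * sqrt ((a-x)/2))) by ring.
      rewrite Hm, Rabs_right by lra. lra.
    + replace (sqrt ((a + x) / 2) * (-1 * sqrt ((a - x) / 2)) + -1 * sqrt ((a - x) / 2) * sqrt ((a + x) / 2))
        with (-2 * (sqrt ((a+x)/2) * sqrt ((a-x)/2))) by ring.
      rewrite Hm, Rabs_left by lra. lra.
Qed.

Lemma Cnorm_scal_pos k v : 0 <= k -> Cnorm (Cscal k v) = k * Cnorm v.
Proof. intros. rewrite Cnorm_scal, Rabs_right; lra. Qed.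

Lemma Csqrt_scal k v : 0 < k -> Csqrt (Cscal k v) = Cscal (sqrt k) (Csqrt v).
Proof.
  intros Hk. unfold Csqrt. rewrite Cnorm_scal_pos by lra.
  destruct v as [x y]. set (a := Cnorm (x,y)).
  assert (Ha : Rabs x <= a) by (apply (fst_le_Cnorm (x,y))).
  pose proof (Rabs_le_inv _ _ Ha) as [Ha1 Ha2].
  unfold Cscal; simpl. apply injective_projections; simpl.
  - replace ((k * a + k * x) / 2) with (k * ((a + x)/2)) by field.
    apply sqrt_mult; lra.
  - replace ((k * a - k * x) / 2) with (k * ((a - x)/2)) by field.
    rewrite sqrt_mult by lra.
    destruct (Rle_dec 0 (k*y)), (Rle_dec 0 y); try ring.
    + exfalso. nra.
    + exfalso. apply n. nra.
Qed.

Lemma Csqrt_fst v : fst (Csqrt v) = sqrt ((Cnorm v + fst v)/2).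
Proof. reflexivity. Qed.

Lemma Cnorm_Csqrt_sq v : Cnorm (Csqrt v) * Cnorm (Csqrt v) = Cnorm v.
Proof.
  rewrite <- Cnorm_mul, Csqrt_sq. reflexivity.
Qed.

Fixpoint Csum (f : nat -> Cpx) (m : nat) : Cpx :=
  match m with O => f O | S m' => Cadd (Csum f m') (f (S m')) end.

Lemma Csum_S f m : Csum f (S m) = Cadd (Csum f m) (f (S m)).
Proof. reflexivity. Qed.

Definition PS (a : nat -> R) (z : Cpx) (m : nat) : Cpx := Csum (fun k => Cscal (a k) (Cpow z k)) m.

Definition lc (n : nat) (al : R) (k : nat) : R :=
  binom_na n al * (poch (- INR n) k / (poch (al + 1) k * INR (fact k))).

Lemma hyp_Csum n b z m : hyp1F1_sum n b z m =
  Csum (fun k => Cscal (poch (- INR n) k / (poch b k * INR (fact k))) (Cpow z k)) m.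
Proof. induction m; simpl; [reflexivity|]. rewrite IHm. reflexivity. Qed.

Lemma Cscal_Csum c f m : Cscal c (Csum f m) = Csum (fun k => Cscal c (f k)) m.
Proof. induction m; simpl; [reflexivity|]. rewrite <- IHm. ceq; ring. Qed.

Lemma Laguerre_PS n al z : Laguerre n al z = PS (lc n al) z n.
Proof.
  unfold Laguerre, hyp1F1_neg, PS. rewrite hyp_Csum, Cscal_Csum.
  assert (forall m, Csum (fun k : nat => Cscal (binom_na n al)
      (Cscal (poch (- INR n) k / (poch (al + 1) k * INR (fact k))) (Cpow z k))) m =
    Csum (fun k : nat => Cscal (lc n al k) (Cpow z k)) m) as E.
  { intro m; induction m; simpl; [unfold lc; ceq; ring| rewrite IHm; unfold lc; ceq; ring]. }
  apply E.
Qed.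

Lemma poch_zero n k : (n < k)%nat -> poch (- INR n) k = 0.
Proof.
  induction k; intros H; [lia|].
  simpl. destruct (Nat.eq_dec n k) as [->|Hne].
  - ring.
  - rewrite IHk by lia. ring.
Qed.

Lemma lc_zero n al k : (n < k)%nat -> lc n al k = 0.
Proof. intros H. unfold lc. rewrite poch_zero by auto. unfold Rdiv. ring. Qed.

Lemma PS_extend a z m j : (forall k, (m < k)%nat -> a k = 0) -> PS a z m = PS a z (m + j).
Proof.
  intros H. induction j.
  - rewrite Nat.add_0_r. reflexivity.
  - rewrite Nat.add_succ_r. unfold PS in *. simpl. rewrite <- IHj. rewrite H by lia.
    ceq; ring.
Qed.

Lemma PS_add a b z m : Cadd (PS a z m) (PS b z m) = PS (fun k => a k + b k) z m.
Proof. unfold PS; induction m; simpl; [ceq; ring|]. rewrite <- IHm. ceq; ring. Qed.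

Lemma PS_scal c a z m : Cscal c (PS a z m) = PS (fun k => c * a k) z m.
Proof. unfold PS; induction m; simpl; [ceq; ring|]. rewrite <- IHm. ceq; ring. Qed.

Lemma PS_opp a z m : Copp (PS a z m) = PS (fun k => - a k) z m.
Proof. unfold PS; induction m; simpl; [ceq; ring|]. rewrite <- IHm. ceq; ring. Qed.

Lemma PS_shift a z m : Cmul z (PS a z m) =
  PS (fun k => match k with O => 0 | S k' => a k' end) z (S m).
Proof.
  unfold PS; induction m.
  - simpl. ceq; ring.
  - rewrite (Csum_S _ (S m)), <- IHm, Csum_S. simpl Cpow. ceq; ring.
Qed.

Lemma PS_ext a b z m : (forall k, (k <= m)%nat -> a k = b k) -> PS a z m = PS b z m.
Proof.
  unfold PS; induction m; intros H; simpl.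
  - rewrite H by lia. reflexivity.
  - rewrite IHm by (intros; apply H; lia). rewrite H by lia. reflexivity.
Qed.

Lemma poch_S x k : poch x (S k) = poch x k * (x + INR k).
Proof. reflexivity. Qed.

Lemma poch_shift x k : poch x (S k) = x * poch (x + 1) k.
Proof.
  induction k.
  - simpl. ring.
  - rewrite poch_S, IHk, poch_S, S_INR. ring.
Qed.

Lemma poch_pos x k : 0 < x -> 0 < poch x k.
Proof.
  intros H. induction k; simpl; [lra|]. pose proof (pos_INR k). nra.
Qed.

Lemma fact_S n : INR (fact (S n)) = INR (S n) * INR (fact n).
Proof. change (fact (S n)) with (S n * fact n)%nat. apply mult_INR. Qed.

Lemma fact_pos n : 0 < INR (fact n).
Proof. apply lt_0_INR. apply lt_O_fact. Qed.

Lemma poch_a1 al n : poch (al + 1 + 1) n = poch (al + 1) n * (al + 1 + INR n) / (al + 1)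
  \/ al + 1 = 0.
Proof.
  destruct (Req_dec (al+1) 0); [right; auto|left].
  pose proof (poch_shift (al+1) n) as E. rewrite poch_S in E. field_simplify_eq; auto. lra.
Qed.

Lemma I1_coef al n k : -1 < al ->
  INR (S n) * lc (S n) al k = (INR (S n) + al) * lc n al k -
    (match k with O => 0 | S k' => lc n (al + 1) k' end).
Proof.
  intros Hal. pose proof (fact_pos n). pose proof (pos_INR n).
  destruct k as [|k'].
  - unfold lc, binom_na. rewrite (poch_S (al+1) n), fact_S, S_INR. simpl poch. simpl fact.
    simpl INR. field. lra.
  - unfold lc, binom_na.
    pose proof (fact_pos k'). pose proof (pos_INR k').
    assert (Hg : 0 < poch (al + 1 + 1) k') by (apply poch_pos; lra).
    rewrite (poch_S (al+1) n).
    rewrite (poch_shift (- INR (S n)) k').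
    replace (- INR (S n) + 1) with (- INR n) by (rewrite S_INR; ring).
    rewrite (poch_S (- INR n) k').
    rewrite !(poch_shift (al+1) k').
    rewrite !fact_S.
    destruct (poch_a1 al n) as [E|E]; [|lra]. rewrite E.
    rewrite !S_INR. field. repeat split; lra.
Qed.

Lemma I2_coef al n k : -1 < al ->
  INR (S n) * lc (S n) (al + 1) k = INR (S n) * lc n (al + 1) k -
    (match k with O => 0 | S k' => lc n (al + 1) k' end) + (INR (S n) + al) * lc n al k.
Proof.
  intros Hal. pose proof (fact_pos n). pose proof (pos_INR n).
  destruct k as [|k'].
  - unfold lc, binom_na. rewrite (poch_S (al+1+1) n), fact_S, S_INR.
    simpl poch. simpl fact. simpl INR.
    destruct (poch_a1 al n) as [E|E]; [|lra]. rewrite E.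
    field. lra.
  - unfold lc, binom_na.
    pose proof (fact_pos k'). pose proof (pos_INR k').
    assert (Hg : 0 < poch (al + 1 + 1) k') by (apply poch_pos; lra).
    rewrite (poch_S (al+1+1) n).
    rewrite !(poch_shift (- INR (S n)) k').
    replace (- INR (S n) + 1) with (- INR n) by (rewrite S_INR; ring).
    rewrite !(poch_S (- INR n) k').
    rewrite !(poch_shift (al+1) k').
    rewrite !(poch_S (al+1+1) k').
    rewrite !fact_S.
    destruct (poch_a1 al n) as [E|E]; [|lra]. rewrite E.
    rewrite !S_INR. field. repeat split; lra.
Qed.

Lemma PS_ext1 al n z : PS (lc n al) z n = PS (lc n al) z (S n).
Proof. rewrite (PS_extend _ z n 1). f_equal. lia. intros; apply lc_zero; auto. Qed.

Lemma Lag_I1 al n z : -1 < al ->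
  Cscal (INR (S n)) (Laguerre (S n) al z) =
  Cadd (Cscal (INR (S n) + al) (Laguerre n al z)) (Copp (Cmul z (Laguerre n (al+1) z))).
Proof.
  intros Hal. rewrite !Laguerre_PS. rewrite PS_shift, (PS_ext1 al n z).
  rewrite PS_scal, PS_scal, PS_opp, PS_add. apply PS_ext. intros k _.
  rewrite I1_coef by auto. ring.
Qed.

Lemma Lag_I2 al n z : -1 < al ->
  Cscal (INR (S n)) (Laguerre (S n) (al+1) z) =
  Cadd (Cadd (Cscal (INR (S n)) (Laguerre n (al+1) z)) (Copp (Cmul z (Laguerre n (al+1) z))))
       (Cscal (INR (S n) + al) (Laguerre n al z)).
Proof.
  intros Hal. rewrite !Laguerre_PS. rewrite PS_shift, (PS_ext1 al n z), (PS_ext1 (al+1) n z).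
  rewrite !PS_scal, PS_opp, !PS_add. apply PS_ext. intros k _.
  rewrite I2_coef by auto. ring.
Qed.

Lemma Lag_0 al z : Laguerre 0 al z = (1, 0).
Proof. unfold Laguerre, hyp1F1_neg, binom_na. simpl. ceq; field. Qed.

Definition reW (r w : Cpx) : R := fst r * fst w + snd r * snd w.

Lemma step_alg (N m : R) (w r : Cpx) : 0 < N -> 0 < m -> 0 < fst w -> 0 <= reW r w ->
  Cadd (Csub (RtoC N) (Copp (Cmul w w))) (Cscal m r) <> (0,0) /\
  0 <= reW (Cdiv (Csub (Cscal m r) (Copp (Cmul w w))) (Cadd (Csub (RtoC N) (Copp (Cmul w w))) (Cscal m r))) w.
Proof.
  destruct w as [p q], r as [x y]. unfold reW. simpl. intros HN Hm Hp HX.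
  set (X := x*p + y*q) in *. set (Y := y*p - x*q). set (W2 := p*p+q*q).
  set (D1 := N - - (p * p - q * q) + m * x). set (D2 := 0 - - (p * q + q * p) + m * y).
  set (n1 := m * x - - (p * p - q * q)). set (n2 := m * y - - (p * q + q * p)).
  set (E := n1 * (D1 * p - D2 * q) + n2 * (D1 * q + D2 * p)).
  assert (HE : W2 * E = m*N*X*W2 + 2*m*p*p*X*W2 + m*m*p*X*X + (N*p + p*p*p)*W2*W2 + p*(m*Y + q*W2)*(m*Y+q*W2)).
  { unfold W2, E, X, Y, D1, D2, n1, n2. ring. }
  assert (HW2 : 0 < W2) by (unfold W2; nra).
  assert (HEpos : 0 < W2 * E).
  { rewrite HE. assert (0 <= m*N*X*W2) by (repeat apply Rmult_le_pos; lra).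
    assert (0 <= 2*m*p*p*X*W2) by (repeat apply Rmult_le_pos; lra).
    assert (0 <= m*m*p*X*X) by (repeat apply Rmult_le_pos; lra).
    assert (0 < (N*p + p*p*p)*W2*W2) by (repeat apply Rmult_lt_0_compat; nra).
    assert (0 <= p*(m*Y + q*W2)*(m*Y+q*W2)).
    { rewrite Rmult_assoc. apply Rmult_le_pos; [lra|]. apply Rle_0_sqr. }
    lra. }
  assert (HEp : 0 < E) by (apply (Rmult_lt_reg_l W2); lra).
  assert (Hd : 0 < D1*D1 + D2*D2).
  { destruct (Req_dec D1 0), (Req_dec D2 0); try nra.
    exfalso. unfold E in HEp. rewrite H, H0 in HEp. lra. }
  split.
  - unfold Cadd, Csub, Copp, Cmul, RtoC, Cscal; simpl. intro Heq.
    pose proof (f_equal fst Heq) as H1; pose proof (f_equal snd Heq) as H2; simpl in H1, H2.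
    assert (D1 = 0) by (unfold D1; lra). assert (D2 = 0) by (unfold D2; lra). nra.
  - unfold Cdiv, Cadd, Csub, Copp, Cmul, RtoC, Cscal, Cinv; simpl.
    match goal with |- 0 <= ?g => replace g with (E / (D1*D1+D2*D2)) end.
    + apply Rlt_le. apply Rdiv_lt_0_compat; lra.
    + unfold E, D1, D2, n1, n2. unfold D1, D2 in Hd. field. lra.
Qed.

Lemma nz_of_pos z : 0 < fst z * fst z + snd z * snd z -> z <> (0,0).
Proof. intros H E. rewrite E in H. simpl in H. lra. Qed.

Lemma mul_nz a b : a <> (0,0) -> b <> (0,0) -> Cmul a b <> (0,0).
Proof.
  intros Ha Hb. apply nz_of_pos. pose proof (Cnorm_nz a Ha). pose proof (Cnorm_nz b Hb).
  destruct a as [a1 a2], b as [b1 b2]; simpl in *.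
  replace ((a1 * b1 - a2 * b2) * (a1 * b1 - a2 * b2) + (a1 * b2 + a2 * b1) * (a1 * b2 + a2 * b1))
    with ((a1*a1+a2*a2)*(b1*b1+b2*b2)) by ring. nra.
Qed.

Lemma scal_nz k a : k <> 0 -> a <> (0,0) -> Cscal k a <> (0,0).
Proof.
  intros Hk Ha. rewrite Cscal_mul. apply mul_nz; auto.
  apply nz_of_pos. unfold RtoC; simpl. nra.
Qed.

Lemma div_mul a b : b <> (0,0) -> Cmul (Cdiv a b) b = a.
Proof.
  intros Hb. pose proof (Cnorm_nz b Hb). destruct a as [a1 a2], b as [b1 b2]; simpl in *.
  ceq; field; lra.
Qed.

Lemma div_eq a b c d : b <> (0,0) -> d <> (0,0) -> Cmul a d = Cmul c b -> Cdiv a b = Cdiv c d.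
Proof.
  intros Hb Hd E. pose proof (Cnorm_nz b Hb). pose proof (Cnorm_nz d Hd).
  destruct a as [a1 a2], b as [b1 b2], c as [c1 c2], d as [d1 d2]; simpl in *.
  unfold Cmul in E; simpl in E.
  pose proof (f_equal fst E) as E1; pose proof (f_equal snd E) as E2; simpl in E1, E2.
  assert (Z1 : a1 * d1 - a2 * d2 - (c1 * b1 - c2 * b2) = 0) by lra.
  assert (Z2 : a1 * d2 + a2 * d1 - (c1 * b2 + c2 * b1) = 0) by lra.
  assert (H1 : (a1 * d1 - a2 * d2 - (c1 * b1 - c2 * b2)) * (b1*d1 - b2*d2) = 0) by (rewrite Z1; ring).
  assert (H2 : (a1 * d2 + a2 * d1 - (c1 * b2 + c2 * b1)) * (b1*d2 + b2*d1) = 0) by (rewrite Z2; ring).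
  assert (H3 : (a1 * d1 - a2 * d2 - (c1 * b1 - c2 * b2)) * (b1*d2 + b2*d1) = 0) by (rewrite Z1; ring).
  assert (H4 : (a1 * d2 + a2 * d1 - (c1 * b2 + c2 * b1)) * (b1*d1 - b2*d2) = 0) by (rewrite Z2; ring).
  ceq.
  - field_simplify_eq; try lra.
  - field_simplify_eq; try lra.
Qed.

Definition rr (al : R) (z : Cpx) (n : nat) : Cpx := Cdiv (Laguerre n al z) (Laguerre n (al+1) z).

Definition Dn (al : R) (z : Cpx) (n : nat) : Cpx :=
  Cadd (Csub (RtoC (INR (S n))) z) (Cscal (INR (S n) + al) (rr al z n)).

Lemma Copp_Copp z : Copp (Copp z) = z.
Proof. ceq; ring. Qed.

Lemma lag_seq al z w : -1 < al -> Cmul w w = Copp z -> 0 < fst w ->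
  forall n, Laguerre n (al+1) z <> (0,0) /\ 0 <= reW (rr al z n) w /\
    Dn al z n <> (0,0) /\
    Cmul (rr al z (S n)) (Dn al z n) = Csub (Cscal (INR (S n) + al) (rr al z n)) z.
Proof.
  intros Hal Hw Hp.
  assert (Hz : z = Copp (Cmul w w)) by (rewrite Hw, Copp_Copp; reflexivity).
  assert (Hbase : Laguerre 0 (al+1) z <> (0,0) /\ 0 <= reW (rr al z 0) w).
  { unfold rr. rewrite !Lag_0. split.
    - intro E. injection E. lra.
    - unfold reW, Cdiv, Cmul, Cinv; simpl. field_simplify; lra. }
  assert (Hstep : forall n, Laguerre n (al+1) z <> (0,0) -> 0 <= reW (rr al z n) w ->
     Laguerre (S n) (al+1) z <> (0,0) /\ 0 <= reW (rr al z (S n)) w /\ Dn al z n <> (0,0) /\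
     Cmul (rr al z (S n)) (Dn al z n) = Csub (Cscal (INR (S n) + al) (rr al z n)) z).
  { intros n HP Hr.
    assert (HN : 0 < INR (S n)) by (apply lt_0_INR; lia).
    assert (Hm : 0 < INR (S n) + al) by (rewrite S_INR; pose proof (pos_INR n); lra).
    destruct (step_alg (INR (S n)) (INR (S n) + al) w (rr al z n) HN Hm Hp Hr) as [HD HF].
    rewrite <- Hz in HD, HF. fold (Dn al z n) in HD, HF. unfold Dn in HF.
    set (P := Laguerre n (al+1) z) in *. set (A := Laguerre n al z).
    assert (HA : A = Cmul (rr al z n) P) by (unfold rr; rewrite div_mul; auto).
    assert (E2 : Cscal (INR (S n)) (Laguerre (S n) (al+1) z) = Cmul P (Dn al z n)).
    { rewrite Lag_I2 by auto. fold P A. rewrite HA. unfold Dn. ceq; ring. }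
    assert (E1 : Cscal (INR (S n)) (Laguerre (S n) al z) =
                 Cmul P (Csub (Cscal (INR (S n) + al) (rr al z n)) z)).
    { rewrite Lag_I1 by auto. fold P A. rewrite HA. ceq; ring. }
    assert (HPS : Laguerre (S n) (al+1) z <> (0,0)).
    { intro E. assert (Cmul P (Dn al z n) = (0,0)) as E'.
      { rewrite <- E2, E. ceq; ring. }
      exact (mul_nz P _ HP HD E'). }
    assert (Hrr : rr al z (S n) = Cdiv (Csub (Cscal (INR (S n) + al) (rr al z n)) z) (Dn al z n)).
    { change (rr al z (S n)) with (Cdiv (Laguerre (S n) al z) (Laguerre (S n) (al+1) z)).
      apply div_eq; auto.
      assert (HNz : INR (S n) <> 0) by lra.
      assert (Cmul (Cscal (INR (S n)) (Laguerre (S n) al z)) (Dn al z n) =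
              Cmul (Csub (Cscal (INR (S n) + al) (rr al z n)) z) (Cscal (INR (S n)) (Laguerre (S n) (al+1) z))) as E3.
      { rewrite E1, E2. ceq; ring. }
      clear E1 E2. set (N := INR (S n)) in *. clearbody N.
      destruct (Laguerre (S n) al z) as [l1 l2], (Laguerre (S n) (al+1) z) as [k1 k2].
      destruct (Dn al z n) as [d1 d2], (Csub (Cscal (INR (S n) + al) (rr al z n)) z) as [x1 x2].
      unfold Cmul, Cscal in E3; simpl in E3.
      pose proof (f_equal fst E3) as F1; pose proof (f_equal snd E3) as F2; simpl in F1, F2.
      ceq.
      - apply (Rmult_eq_reg_l N); [|auto]. lra.
      - apply (Rmult_eq_reg_l N); [|auto]. lra. }
    repeat split; auto.
    - rewrite Hrr. exact HF.
    - rewrite Hrr, div_mul; auto. }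
  intro n. induction n.
  - destruct Hbase as [H1 H2]. destruct (Hstep 0%nat H1 H2) as [? [? [? ?]]]. auto.
  - destruct IHn as [H1 [H2 _]]. destruct (Hstep n H1 H2) as [H3 [H4 _]].
    destruct (Hstep (S n) H3 H4) as [? [? [? ?]]]. auto.
Qed.

Lemma slit_pos z : slit_plane z -> 0 < Cnorm z - fst z.
Proof.
  intros Hs. pose proof (fst_le_Cnorm z). pose proof (Rle_abs (fst z)).
  destruct (Req_dec (Cnorm z) (fst z)) as [E|E]; [|lra].
  exfalso. apply Hs. pose proof (Cnorm_sq z). rewrite E in H1.
  split; [nra|]. pose proof (Cnorm_ge0 z). lra.
Qed.

Lemma fold_max_ge (l : list nat) i : In i l -> (i <= fold_right Nat.max 0 l)%nat.
Proof.
  induction l; simpl; [tauto|]. intros [->|H]; [lia|]. specialize (IHl H). lia.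
Qed.

Lemma compact_bounds K : (forall z, K z -> slit_plane z) -> Ccompact K ->
  exists R d, 0 < R /\ 0 < d /\ forall z, K z -> Cnorm z <= R /\ d <= Cnorm z - fst z.
Proof.
  intros Hs Hc.
  set (U := fun (k : nat) (z : Cpx) => Cnorm z < INR k /\ / (INR k + 1) < Cnorm z - fst z).
  assert (Hopen : forall k, Copen (U k)).
  { intros k z [H1 H2].
    exists (Rmin (INR k - Cnorm z) ((Cnorm z - fst z - / (INR k + 1))/2)).
    split. { apply Rmin_glb_lt; lra. }
    intros w' Hw'. pose proof (Rmin_l (INR k - Cnorm z) ((Cnorm z - fst z - / (INR k + 1))/2)).
    pose proof (Rmin_r (INR k - Cnorm z) ((Cnorm z - fst z - / (INR k + 1))/2)).
    pose proof (Cnorm_sub_rev w' z). pose proof (Cnorm_sub_rev z w').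
    assert (Cnorm (Csub z w') = Cnorm (Csub w' z)) as E.
    { replace (Csub z w') with (Copp (Csub w' z)) by (ceq; ring). apply Cnorm_opp. }
    pose proof (fst_le_Cnorm (Csub w' z)) as H5. pose proof (Rle_abs (fst (Csub w' z))) as H6.
    replace (fst (Csub w' z)) with (fst w' - fst z) in H5, H6 by (unfold Csub, Cadd, Copp; simpl; ring).
    rewrite E in H4.
    split; lra. }
  assert (Hcov : forall z, K z -> exists k, U k z).
  { intros z Hz. pose proof (slit_pos z (Hs z Hz)) as Hg.
    destruct (nat_arch (Cnorm z + / (Cnorm z - fst z))) as [k Hk].
    exists k. unfold U. pose proof (Cnorm_ge0 z).
    assert (0 < / (Cnorm z - fst z)) by (apply Rinv_0_lt_compat; lra).
    split; [lra|].
    rewrite <- (Rinv_inv (Cnorm z - fst z)). apply Rinv_lt_contravar; [|lra].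
    apply Rmult_lt_0_compat; [auto|]. pose proof (pos_INR k); lra. }
  destruct (Hc nat U Hopen Hcov) as [l Hl].
  set (k0 := fold_right Nat.max 0%nat l).
  exists (INR k0 + 1), (/ (INR k0 + 1)). pose proof (pos_INR k0).
  split; [lra|]. split; [apply Rinv_0_lt_compat; lra|].
  intros z Hz. destruct (Hl z Hz) as [i [Hi [U1 U2]]].
  pose proof (fold_max_ge l i Hi) as Hle. apply le_INR in Hle. fold k0 in Hle.
  split; [lra|].
  apply Rlt_le. eapply Rle_lt_trans; [|exact U2].
  apply Rinv_le_contravar; [pose proof (pos_INR i)|]; lra.
Qed.

Lemma sq_le x y : 0 <= x -> 0 <= y -> x * x <= y * y -> x <= y.
Proof. intros. nra. Qed.

Lemma uv_facts u v : 0 < u -> u <= 1/2 -> 0 < v -> v * v * (1 - u * u) = u * u ->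
  u <= v /\ v <= 2 * u /\ u*u*u/2 <= v - u /\ v - u <= u*u*u/2 + u*u*u*u.
Proof.
  intros Hu Hu2 Hv E.
  assert (Hp : 0 < 1 - u*u) by nra.
  assert (H1 : u * (1 + u*u/2) <= v).
  { apply sq_le; [nra|nra|].
    assert (A: (u*(1+u*u/2))*(u*(1+u*u/2)) * (1-u*u) <= v*v*(1-u*u)).
    { rewrite E. assert (0 <= u*u*u*u*(3/4 + u*u/4)) by (repeat apply Rmult_le_pos; nra). nra. }
    apply Rmult_le_reg_r in A; auto. }
  assert (H2 : v <= u * (1 + u*u/2 + u*u*u)).
  { apply sq_le; [nra|nra|].
    assert (A: v*v*(1-u*u) <= (u*(1+u*u/2+u*u*u))*(u*(1+u*u/2+u*u*u)) * (1-u*u)).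
    { rewrite E. set (s := u*u/2+u*u*u).
      assert (0 <= u*u*u*(2 - u - 2*u*u)) by (repeat apply Rmult_le_pos; nra).
      assert (0 <= s*s*u*u*u*u) by (repeat apply Rmult_le_pos; unfold s; nra).
      unfold s in *. nra. }
    apply Rmult_le_reg_r in A; auto. }
  repeat split; nra.
Qed.

Definition zz (w : Cpx) : Cpx := Copp (Cmul w w).
Definition cc (al : R) (w : Cpx) : Cpx := Cadd (RtoC (al/2 + 1/4)) (Cscal (1/2) (zz w)).
Definition tgt (al : R) (w : Cpx) (u : R) : Cpx := Cadd (Cscal u w) (Cscal (u*u) (cc al w)).

Definition Nres (al : R) (w : Cpx) (a u v : R) : Cpx :=
  Csub (Csub (Cscal (a*a + al) (tgt al w v)) (zz w))
       (Cmul (tgt al w u) (Cadd (Csub (RtoC (a*a)) (zz w)) (Cscal (a*a + al) (tgt al w v)))).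

Lemma Nres_id al w a u v : 0 < a -> u = / a ->
  Cscal (u*u) (Nres al w a u v) =
  let d := v - u in let c := cc al w in let z := zz w in
  Cadd (Cadd (Cadd (Cadd (Cadd (Cadd (Cadd (Cadd (Cadd
   (Cscal (d - u*u*u/2) w)
   (Cscal (d*(u+v)) c))
   (Cscal (al*u*u*d) w))
   (Cscal (al*u*u*v*v) c))
   (Cscal (u*u*u*u) (Cmul z c)))
   (Cscal (-(al*u*u)) (Cmul (tgt al w u) (tgt al w v))))
   (Cscal (u*d) z))
   (Cscal (-(u*d*(u+v))) (Cmul w c)))
   (Cscal (-(u*u*d)) (Cmul w c)))
   (Cscal (-(u*u*v*v)) (Cmul c c)).
Proof.
  intros Ha ->. destruct w as [p q]. unfold Nres, tgt, cc, zz. ceq; field; lra.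
Qed.

Lemma bnd_term x X s B : Rabs x <= s -> Cnorm X <= B -> Cnorm (Cscal x X) <= s * B.
Proof. intros. rewrite Cnorm_scal. apply Rmult_le_compat; auto using Rabs_pos, Cnorm_ge0. Qed.

Lemma norm_zz w : Cnorm (zz w) = Cnorm w * Cnorm w.
Proof. unfold zz. rewrite Cnorm_opp, Cnorm_mul. reflexivity. Qed.

Lemma norm_cc al w Wb : Cnorm w <= Wb -> Cnorm (cc al w) <= Rabs al + 1 + Wb * Wb.
Proof.
  intros Hw. unfold cc. eapply Rle_trans; [apply Cnorm_add_le|].
  rewrite Cnorm_RtoC, Cnorm_scal, norm_zz. pose proof (Cnorm_ge0 w).
  assert (Rabs (al/2 + 1/4) <= Rabs al + 1).
  { eapply Rle_trans; [apply Rabs_triang|]. rewrite (Rabs_right (1/4)) by lra.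
    unfold Rdiv. rewrite Rabs_mult, (Rabs_right (/2)) by lra. pose proof (Rabs_pos al). lra. }
  rewrite (Rabs_right (1/2)) by lra. nra.
Qed.

Lemma norm_tgt al w Wb u : 0 <= u -> Cnorm w <= Wb ->
  Cnorm (tgt al w u) <= Wb * u + (Rabs al + 1 + Wb*Wb) * (u*u).
Proof.
  intros Hu Hw. unfold tgt. eapply Rle_trans; [apply Cnorm_add_le|].
  rewrite !Cnorm_scal, (Rabs_right u), (Rabs_right (u*u)) by nra.
  pose proof (norm_cc al w Wb Hw). pose proof (Cnorm_ge0 w). pose proof (Cnorm_ge0 (cc al w)). nra.
Qed.

Definition C1c (al Wb : R) : R :=
  let cb := Rabs al + 1 + Wb*Wb in
  Wb + 3*cb + Rabs al * Wb + 4 * Rabs al * cb + Wb*Wb*cb + Rabs al * (2*(Wb+cb)*(Wb+cb)) +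
  Wb*Wb + 3*(Wb*cb) + Wb*cb + 4*(cb*cb).

Lemma Nres_bound al Wb w a b : 0 < a -> 0 < b -> a*a = b*b+1 -> / a <= 1/2 -> 0 <= Wb -> Cnorm w <= Wb ->
  Cnorm (Nres al w a (/a) (/b)) <= C1c al Wb * (/a * /a).
Proof.
  intros Ha Hb Hab Hu2 HWb Hw.
  set (u := / a) in *. set (v := / b) in *.
  assert (Hu : 0 < u) by (unfold u; apply Rinv_0_lt_compat; auto).
  assert (Hv : 0 < v) by (unfold v; apply Rinv_0_lt_compat; auto).
  assert (E : v * v * (1 - u * u) = u * u) by (unfold u, v; field_simplify_eq; try lra; nra).
  destruct (uv_facts u v Hu Hu2 Hv E) as [F1 [F2 [F3 F4]]].
  pose proof (Nres_id al w a u v Ha eq_refl) as Id. simpl in Id.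
  set (cb := Rabs al + 1 + Wb*Wb).
  set (d := v - u) in *. set (c := cc al w) in *. set (z := zz w) in *.
  assert (Hc : Cnorm c <= cb) by (apply norm_cc; auto).
  assert (Hz : Cnorm z <= Wb * Wb) by (unfold z; rewrite norm_zz; pose proof (Cnorm_ge0 w); nra).
  assert (Hcb : 1 <= cb) by (unfold cb; pose proof (Rabs_pos al); nra).
  assert (Ht : Cnorm (tgt al w u) <= (Wb + cb) * u).
  { eapply Rle_trans; [apply (norm_tgt al w Wb); [lra|auto]|]. fold cb.
    assert (cb*(u*u) <= cb*u) by (apply Rmult_le_compat_l; [lra|nra]). nra. }
  assert (Ht' : Cnorm (tgt al w v) <= 2 * (Wb + cb) * u).
  { eapply Rle_trans; [apply (norm_tgt al w Wb); [lra|auto]|]. fold cb.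
    assert (cb*(v*v) <= cb*(2*u)) by (apply Rmult_le_compat_l; nra).
    assert (Wb*v <= Wb*(2*u)) by (apply Rmult_le_compat_l; nra). nra. }
  pose proof (Rabs_pos al) as Hal.
  assert (Hu3 : 0 < u*u*u) by (repeat apply Rmult_lt_0_compat; lra).
  assert (Hu4 : u*u*u*u <= u*u*u/2) by nra.
  assert (Hd0 : 0 <= d) by lra.
  assert (Hd1 : d <= u*u*u) by lra.
  assert (Hu1 : u <= 1) by lra.
  assert (U4 : 0 <= u*u*u*u) by nra.
  assert (Hu5 : u*u*u*u*u <= u*u*u*u) by nra.
  assert (T1 : Cnorm (Cscal (d - u*u*u/2) w) <= (u*u*u*u) * Wb).
  { apply bnd_term; auto. apply Rabs_le. split; lra. }
  assert (T2 : Cnorm (Cscal (d*(u+v)) c) <= (3*(u*u*u*u)) * cb).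
  { apply bnd_term; auto. rewrite Rabs_right by (apply Rle_ge; repeat apply Rmult_le_pos; lra).
    assert (d*(u+v) <= (u*u*u)*(3*u)) by (apply Rmult_le_compat; lra). lra. }
  assert (T3 : Cnorm (Cscal (al*u*u*d) w) <= (Rabs al*(u*u*u*u)) * Wb).
  { apply bnd_term; auto. rewrite !Rabs_mult, (Rabs_right u), (Rabs_right d) by lra.
    assert (u*u*d <= u*u*(u*u*u)) by (apply Rmult_le_compat_l; nra).
    assert (Rabs al * u * u * d = Rabs al * (u*u*d)) by ring.
    assert (Rabs al * (u*u*d) <= Rabs al * (u*u*u*u)) by (apply Rmult_le_compat_l; nra). lra. }
  assert (T4 : Cnorm (Cscal (al*u*u*v*v) c) <= (4*Rabs al*(u*u*u*u)) * cb).
  { apply bnd_term; auto. rewrite !Rabs_mult, (Rabs_right u), (Rabs_right v) by (apply Rle_ge; repeat apply Rmult_le_pos; lra).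
    assert (u*u*(v*v) <= u*u*(4*(u*u))) by (apply Rmult_le_compat_l; nra).
    assert (Rabs al * (u*u*v*v) <= Rabs al * (4*(u*u*u*u))) by (apply Rmult_le_compat_l; nra).
    assert (Rabs al * u * u * v * v = Rabs al * (u*u*v*v)) by ring. lra. }
  assert (T5 : Cnorm (Cscal (u*u*u*u) (Cmul z c)) <= (u*u*u*u) * (Wb*Wb*cb)).
  { apply bnd_term. rewrite Rabs_right by (apply Rle_ge; repeat apply Rmult_le_pos; lra); lra. rewrite Cnorm_mul.
    apply Rmult_le_compat; auto using Cnorm_ge0. }
  assert (T6 : Cnorm (Cscal (-(al*u*u)) (Cmul (tgt al w u) (tgt al w v))) <=
               (Rabs al * (u*u)) * ((Wb+cb)*u * (2*(Wb+cb)*u))).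
  { apply bnd_term. rewrite Rabs_Ropp, !Rabs_mult, (Rabs_right u) by (apply Rle_ge; repeat apply Rmult_le_pos; lra); lra.
    rewrite Cnorm_mul. apply Rmult_le_compat; auto using Cnorm_ge0. }
  assert (T7 : Cnorm (Cscal (u*d) z) <= (u*u*u*u) * (Wb*Wb)).
  { apply bnd_term; auto. rewrite Rabs_right by (apply Rle_ge; repeat apply Rmult_le_pos; lra).
    assert (u*d <= u*(u*u*u)) by (apply Rmult_le_compat_l; lra). lra. }
  assert (T8 : Cnorm (Cscal (-(u*d*(u+v))) (Cmul w c)) <= (3*(u*u*u*u)) * (Wb*cb)).
  { apply bnd_term. rewrite Rabs_Ropp, Rabs_right by (apply Rle_ge; repeat apply Rmult_le_pos; lra).
    assert (u*d*(u+v) <= u*(u*u*u)*(3*u)) by (apply Rmult_le_compat; nra). nra.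
    rewrite Cnorm_mul. apply Rmult_le_compat; auto using Cnorm_ge0. }
  assert (T9 : Cnorm (Cscal (-(u*u*d)) (Cmul w c)) <= (u*u*u*u) * (Wb*cb)).
  { apply bnd_term. rewrite Rabs_Ropp, Rabs_right by (apply Rle_ge; repeat apply Rmult_le_pos; lra).
    assert (u*u*d <= u*u*(u*u*u)) by (apply Rmult_le_compat_l; nra). nra.
    rewrite Cnorm_mul. apply Rmult_le_compat; auto using Cnorm_ge0. }
  assert (T10 : Cnorm (Cscal (-(u*u*v*v)) (Cmul c c)) <= (4*(u*u*u*u)) * (cb*cb)).
  { apply bnd_term. rewrite Rabs_Ropp, Rabs_right by (apply Rle_ge; repeat apply Rmult_le_pos; lra).
    assert (u*u*(v*v) <= u*u*(4*(u*u))) by (apply Rmult_le_compat_l; nra). nra.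
    rewrite Cnorm_mul. apply Rmult_le_compat; auto using Cnorm_ge0. }
  assert (Hsum : Cnorm (Cscal (u*u) (Nres al w a u v)) <= C1c al Wb * (u*u*u*u)).
  { rewrite Id. eapply Rle_trans; [bnd|]. unfold C1c. fold cb. lra. }
  rewrite Cnorm_scal, Rabs_right in Hsum by nra.
  apply Rmult_le_reg_l with (u*u); [nra|]. nra.
Qed.

Lemma fst_tgt al w u : fst (tgt al w u) = u * fst w + u*u * fst (cc al w).
Proof. unfold tgt, Cadd, Cscal. simpl. ring. Qed.

Lemma fst_ge_neg z B : Cnorm z <= B -> - B <= fst z.
Proof. intros H. pose proof (fst_le_Cnorm z). pose proof (Rle_abs (- fst z)). rewrite Rabs_Ropp in H1. lra. Qed.

Lemma fst_le z B : Cnorm z <= B -> fst z <= B.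
Proof. intros H. pose proof (fst_le_Cnorm z). pose proof (Rle_abs (fst z)). lra. Qed.

Lemma one_minus_t al w Wb om u : Cnorm w <= Wb -> om <= fst w -> 0 < om -> 0 <= Wb -> 0 <= u ->
  let cb := Rabs al + 1 + Wb*Wb in
  (2*cb + (Wb+cb)*(Wb+cb)) * u <= om/2 -> om * u <= 1 -> u <= 1 ->
  Cnorm (Csub (RtoC 1) (tgt al w u)) <= 1 - 3*om*u/4.
Proof.
  intros Hw Hom Hom0 HWb Hu cb HK Hou Hu1.
  pose proof (norm_tgt al w Wb u Hu Hw) as Ht. fold cb in Ht.
  pose proof (norm_cc al w Wb Hw) as Hc. fold cb in Hc.
  pose proof (fst_ge_neg _ _ Hc) as Hc1.
  assert (Hcb : 1 <= cb) by (unfold cb; pose proof (Rabs_pos al); nra).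
  assert (Hft : u*om - u*u*cb <= fst (tgt al w u)).
  { rewrite fst_tgt. assert (u * om <= u * fst w) by (apply Rmult_le_compat_l; lra).
    assert (u*u*(-cb) <= u*u*fst (cc al w)) by (apply Rmult_le_compat_l; nra). nra. }
  assert (Ht2 : Cnorm (tgt al w u) <= (Wb + cb) * u).
  { assert (cb*(u*u) <= cb*u) by (apply Rmult_le_compat_l; nra). nra. }
  apply Cnorm_le_sq; [lra|].
  pose proof (Cnorm_sq (tgt al w u)) as Sq.
  destruct (tgt al w u) as [t1 t2]. simpl in *.
  assert (Hn : t1*t1 + t2*t2 <= ((Wb+cb)*u)*((Wb+cb)*u)).
  { rewrite <- Sq. apply Rmult_le_compat; auto using Cnorm_ge0. }
  unfold Csub, Cadd, Copp, RtoC; simpl.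
  assert (u*(2*cb + (Wb+cb)*(Wb+cb))*u <= u*(om/2)) by (rewrite Rmult_assoc, (Rmult_comm _ u); apply Rmult_le_compat_l; lra).
  nra.
Qed.

Definition DDf (al : R) (w : Cpx) (N : R) (r : Cpx) : Cpx :=
  Cadd (Csub (RtoC N) (zz w)) (Cscal (N + al) r).

Lemma S2step al Wb om w a b r' rN :
  -1 < al -> 0 < om -> om <= fst w -> Cnorm w <= Wb -> 1 <= Wb ->
  0 < a -> 0 < b -> a*a = b*b + 1 ->
  let u := / a in let v := / b in let cb := Rabs al + 1 + Wb*Wb in
  u <= 1/2 -> Wb*Wb*u <= om/4 -> 8*cb*u <= om -> (2*cb + (Wb+cb)*(Wb+cb)) * u <= om/2 ->
  2*(Rabs al + Wb*Wb + om*om/8)*u <= om ->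
  Cmul rN (DDf al w (a*a) r') = Csub (Cscal (a*a + al) r') (zz w) ->
  Cnorm (Csub r' (tgt al w v)) <= (om/4) * v ->
  Cnorm (Csub rN (tgt al w u)) <= (1 - om*u/2) * Cnorm (Csub r' (tgt al w v)) + C1c al Wb * (u*u*u*u).
Proof.
  intros Hal Hom Hfw Hw HWb Ha Hb Hab u v cb Hu1 Hu2 Hu3 Hu4 Hu5 HrN He'.
  assert (Hu : 0 < u) by (unfold u; apply Rinv_0_lt_compat; auto).
  assert (Hv : 0 < v) by (unfold v; apply Rinv_0_lt_compat; auto).
  assert (Hau : a * u = 1) by (unfold u; field; lra).
  assert (E : v * v * (1 - u * u) = u * u) by (unfold u, v; field_simplify_eq; try lra; nra).
  destruct (uv_facts u v Hu Hu1 Hv E) as [F1 [F2 [F3 F4]]].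
  assert (Hcb : 1 <= cb) by (unfold cb; pose proof (Rabs_pos al); nra).
  pose proof (Nres_bound al Wb w a b Ha Hb Hab Hu1 ltac:(lra) Hw) as HN. fold u v in HN.
  clearbody u v.
  assert (Hwom : om <= Wb).
  { pose proof (fst_le_Cnorm w). pose proof (Rle_abs (fst w)). lra. }
  assert (Ha2 : 4 <= a*a).
  { assert (2 <= a). { apply Rmult_le_reg_r with u; [lra|]. rewrite Hau. lra. } nra. }
  set (m := a*a + al) in *.
  assert (Hm : a*a/2 <= m) by (unfold m; lra).
  assert (Hm2 : m <= a*a*(1 + Rabs al * (u*u))).
  { unfold m. replace (a*a*(1 + Rabs al*(u*u))) with (a*a + Rabs al * ((a*u)*(a*u))) by ring.
    rewrite Hau. pose proof (Rle_abs al). lra. }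
  set (t := tgt al w u) in *. set (t' := tgt al w v) in *.
  set (e' := Csub r' t') in *.
  set (D := DDf al w (a*a) r') in *.
  assert (Id : Cmul (Csub rN t) D = Cadd (Nres al w a u v) (Cscal m (Cmul (Csub (RtoC 1) t) e'))).
  { assert (Cmul (Csub rN t) D = Csub (Cmul rN D) (Cmul t D)) as -> by (ceq; ring).
    rewrite HrN. unfold Nres, D, DDf, e'. fold m t t'. ceq; ring. }
  assert (H1t : Cnorm (Csub (RtoC 1) t) <= 1 - 3*om*u/4).
  { assert (om * u <= Wb * (1/2)) by (apply Rmult_le_compat; lra).
    apply (one_minus_t al w Wb om u); [auto|auto|auto|lra|lra| |nra|lra]. exact Hu4. }
  pose proof (norm_cc al w Wb Hw) as Hc. fold cb in Hc.
  pose proof (fst_ge_neg _ _ Hc) as Hc1.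
  assert (Hz : Cnorm (zz w) <= Wb*Wb) by (rewrite norm_zz; pose proof (Cnorm_ge0 w); nra).
  pose proof (fst_le _ _ Hz) as Hz1.
  assert (Hft' : v*om - v*v*cb <= fst t').
  { unfold t'. rewrite fst_tgt. assert (v * om <= v * fst w) by (apply Rmult_le_compat_l; lra).
    assert (v*v*(-cb) <= v*v*fst (cc al w)) by (apply Rmult_le_compat_l; nra). nra. }
  assert (Hfe' : - Cnorm e' <= fst e') by (apply fst_ge_neg; lra).
  assert (Hr' : fst r' = fst t' + fst e') by (unfold e', Csub, Cadd, Copp; simpl; ring).
  assert (Hvcb : v*v*cb <= v*(om/4)).
  { assert (v*cb <= om/4) by nra. nra. }
  assert (Hfr' : v*om/2 <= fst r') by lra.
  assert (HfD : fst D = a*a - fst (zz w) + m * fst r') by (unfold D, DDf, Csub, Cadd, Copp, Cscal, RtoC; simpl; unfold m; ring).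
  assert (Hmr : a*a*u*om/4 <= m * fst r').
  { assert (a*a/2 * (v*om/2) <= m * fst r') by (apply Rmult_le_compat; nra).
    assert (a*a*u*om/4 <= a*a/2*(v*om/2)).
    { assert (u*om <= v*om) by (apply Rmult_le_compat_r; lra). nra. }
    lra. }
  set (L := 1 + om*u/4 - Wb*Wb*(u*u)).
  assert (HL1 : 1 <= L).
  { unfold L. assert (Wb*Wb*u*u <= om/4*u) by (apply Rmult_le_compat_r; lra). lra. }
  assert (HDL : a*a*L <= fst D).
  { unfold L. rewrite HfD. replace (a*a*(1 + om*u/4 - Wb*Wb*(u*u))) with (a*a + a*a*u*om/4 - Wb*Wb*((a*u)*(a*u))) by field.
    rewrite Hau. lra. }
  assert (HDn : a*a*L <= Cnorm D).
  { eapply Rle_trans; [exact HDL|]. pose proof (fst_le_Cnorm D). pose proof (Rle_abs (fst D)). lra. }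
  pose proof (Cnorm_ge0 e') as He0. pose proof (Cnorm_ge0 (Csub rN t)) as HeN0.
  assert (Hmain : Cnorm (Csub rN t) * Cnorm D <= C1c al Wb * (u*u) + m * ((1 - 3*om*u/4) * Cnorm e')).
  { rewrite <- Cnorm_mul, Id. eapply Rle_trans; [apply Cnorm_add_le|].
    apply Rplus_le_compat; [exact HN|]. rewrite Cnorm_scal, Rabs_right by lra. rewrite Cnorm_mul.
    apply Rmult_le_compat_l; [lra|]. apply Rmult_le_compat_r; auto. }
  assert (HC1 : 0 <= C1c al Wb).
  { unfold C1c; cbv zeta. pose proof (Rabs_pos al). repeat apply Rplus_le_le_0_compat; repeat apply Rmult_le_pos; nra. }
  assert (Hpoly : (1 + Rabs al*(u*u)) * (1 - 3*om*u/4) <= (1 - om*u/2) * L).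
  { unfold L. pose proof (Rabs_pos al) as Hal0.
    assert (u*(2*(Rabs al + Wb*Wb + om*om/8)*u) <= u*om) by (apply Rmult_le_compat_l; lra).
    assert (0 <= u*u*u*(Wb*Wb*om/2 + 3*Rabs al*om/4)) by (repeat apply Rmult_le_pos; nra).
    nra. }
  assert (Hstep1 : Cnorm (Csub rN t) * (a*a*L) <= C1c al Wb * (u*u) + a*a*((1 - om*u/2) * L) * Cnorm e').
  { eapply Rle_trans; [apply Rmult_le_compat_l; [lra|exact HDn]|]. eapply Rle_trans; [exact Hmain|].
    apply Rplus_le_compat_l.
    assert (H13 : 0 <= 1 - 3*om*u/4).
    { assert (om * u <= Wb * (1/2)) by (apply Rmult_le_compat; lra). assert (om*u <= 1/2) by nra. lra. }
    assert (m * (1 - 3*om*u/4) <= a*a*(1 + Rabs al*(u*u)) * (1 - 3*om*u/4)) by (apply Rmult_le_compat_r; lra).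
    assert (a*a*(1 + Rabs al*(u*u)) * (1 - 3*om*u/4) <= a*a*((1 - om*u/2) * L)).
    { rewrite Rmult_assoc. apply Rmult_le_compat_l; [nra|exact Hpoly]. }
    assert (m * (1 - 3*om*u/4) * Cnorm e' <= a*a*((1 - om*u/2) * L) * Cnorm e') by (apply Rmult_le_compat_r; lra).
    lra. }
  assert (Hpos : 0 < a*a*L) by nra.
  apply Rmult_le_reg_r with (a*a*L); [exact Hpos|].
  eapply Rle_trans; [exact Hstep1|].
  assert (C1c al Wb * (u*u) <= C1c al Wb * (u*u*u*u) * (a*a*L)).
  { replace (C1c al Wb * (u*u*u*u) * (a*a*L)) with (C1c al Wb * (u*u) * ((a*u)*(a*u)) * L) by ring.
    rewrite Hau. assert (0 <= C1c al Wb * (u*u)) by nra. nra. }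
  nra.
Qed.

Lemma ratio_final P Q a1 a2 X Y S E e x :
  0 < Q -> 0 <= P -> P <= Q -> 0 < a1 -> 0 <= a2 -> 0 <= X -> 0 <= Y -> 0 < S -> 0 <= E ->
  E <= e * S -> 0 <= e -> e <= 1/4 -> 0 < x -> x <= 1 -> e <= x/8 ->
  2*a1*X <= (2*S+E)*P + E*Q -> (2*S - E)*Q - E*P <= 2*a2*Y -> a2 <= (1 - x/2)*a1 ->
  X / Y <= (1 - x/4) * (P / Q) + 2*e.
Proof.
  intros HQ HP HPQ Ha1 Ha2 HX HY HS HE HEe He He4 Hx Hx1 Hex H1 H2 H3.
  set (lam := 1 - x/2) in *.
  assert (Hlam : 1/2 <= lam) by (unfold lam; lra).
  assert (HEQ : E*Q <= e*S*Q) by (apply Rmult_le_compat_r; lra).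
  assert (HEP : E*P <= e*S*Q) by (apply Rle_trans with (E*Q); [apply Rmult_le_compat_l; lra| lra]).
  assert (H2' : 2*S*(1-e)*Q <= 2*a2*Y) by nra.
  assert (HSQ : 0 < S*Q) by nra.
  assert (Hy : 0 < a2 * Y).
  { assert (0 < 2*S*(1-e)*Q) by (repeat apply Rmult_lt_0_compat; lra). lra. }
  assert (HYp : 0 < Y) by (destruct (Req_dec Y 0) as [E0|E0]; [rewrite E0 in Hy; lra| lra]).
  set (T := (1 - x/4)*P + 2*e*Q).
  assert (HT0 : 0 <= T) by (unfold T; assert (0 <= (1 - x/4)*P) by (apply Rmult_le_pos; lra); nra).
  assert (HA : 2*a1*X*Q <= S*((2+e)*P + e*Q)*Q).
  { apply Rmult_le_compat_r; [lra|].
    assert (E*P <= e*S*P) by (apply Rmult_le_compat_r; lra). nra. }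
  assert (HB : lam*((2+e)*P + e*Q) <= 2*(1-e)*T).
  { unfold lam, T.
    assert (((1 - x/2)*(2+e) - 2*(1-e)*(1-x/4))*P <= 0).
    { rewrite <- (Rmult_0_l P). apply Rmult_le_compat_r; [lra|nra]. }
    assert ((1 - x/2)*e*Q <= 2*(1-e)*(2*e)*Q).
    { apply Rmult_le_compat_r; [lra|]. nra. }
    nra. }
  assert (HC : 2*S*(1-e)*Q*T <= lam * (2*a1*T*Y)).
  { assert (2*a2*Y*T <= 2*(lam*a1)*Y*T).
    { apply Rmult_le_compat_r; [lra|]. apply Rmult_le_compat_r; [lra|]. lra. }
    assert (2*S*(1-e)*Q*T <= 2*a2*Y*T) by (apply Rmult_le_compat_r; lra).
    nra. }
  assert (HD : lam * (S*((2+e)*P + e*Q)*Q) <= S*Q*(2*(1-e)*T)).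
  { replace (lam * (S*((2+e)*P + e*Q)*Q)) with (S*Q*(lam*((2+e)*P + e*Q))) by ring.
    apply Rmult_le_compat_l; lra. }
  assert (HXQ : X*Q <= T*Y).
  { assert (lam*(2*a1*X*Q) <= lam*(2*a1*T*Y)).
    { assert (lam*(2*a1*X*Q) <= lam * (S*((2+e)*P + e*Q)*Q)) by (apply Rmult_le_compat_l; lra).
      nra. }
    assert (2*a1*X*Q <= 2*a1*T*Y) by (apply Rmult_le_reg_l with lam; lra).
    nra. }
  apply Rmult_le_reg_r with (Y*Q); [nra|].
  replace (X / Y * (Y * Q)) with (X*Q) by (field; lra).
  replace (((1 - x / 4) * (P / Q) + 2 * e) * (Y * Q)) with (T*Y) by (unfold T; field; lra).
  exact HXQ.
Qed.

Definition C0c (al Wb : R) : R := 2 + 2*Rabs al + 2*(Wb*Wb) + 2*Rabs al*(Wb*Wb) + Wb*Wb*Wb.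

Lemma KS_bound al Wb w a b : 0 < a -> 0 < b -> a*a = b*b+1 -> 2 <= a*a -> 1 <= a -> 0 <= Wb -> Cnorm w <= Wb ->
  Cnorm (Csub (Cscal ((a*a+al)/b) (Csub (RtoC (a*a)) (Cmul w w))) (RtoC (a*a*a))) + Cnorm (Cmul w (Cmul w w))
  <= C0c al Wb * a.
Proof.
  intros Ha Hb Hab Ha2 Ha1 HWb Hw.
  set (l := a / b).
  assert (Hl2 : l*l*(a*a - 1) = a*a) by (unfold l; replace (a*a - 1) with (b*b) by lra; field; lra).
  assert (Hl0 : 0 < l) by (unfold l; apply Rdiv_lt_0_compat; lra).
  assert (Hl1 : 1 <= l).
  { destruct (Rle_lt_dec 1 l) as [?|Hlt]; auto. exfalso. assert (l*l < 1) by nra.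
    assert (l*l*(a*a-1) <= 1*(a*a-1)) by (apply Rmult_le_compat_r; lra). lra. }
  assert (Hll : l*l <= 2).
  { destruct (Rle_lt_dec (l*l) 2) as [?|Hlt]; auto. exfalso.
    assert (2*(a*a-1) < l*l*(a*a-1)) by (apply Rmult_lt_compat_r; lra). lra. }
  assert (Hl2' : l <= 2) by nra.
  assert (Hlm : (l - 1) * (a*a) <= 2) by nra.
  assert (Id : Csub (Cscal ((a*a+al)/b) (Csub (RtoC (a*a)) (Cmul w w))) (RtoC (a*a*a)) =
     Cscal (/a) (Cadd (RtoC (a*a*a*a*(l-1) + al*l*(a*a))) (Cscal (-((a*a+al)*l)) (Cmul w w)))).
  { unfold l. destruct w as [p q]. ceq; field; lra. }
  rewrite Id. rewrite Cnorm_scal, Rabs_right by (apply Rle_ge, Rlt_le, Rinv_0_lt_compat; lra).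
  pose proof (Cnorm_ge0 w).
  assert (Hww : Cnorm (Cmul w w) <= Wb*Wb) by (rewrite Cnorm_mul; apply Rmult_le_compat; lra).
  assert (Hw3 : Cnorm (Cmul w (Cmul w w)) <= Wb*Wb*Wb) by (rewrite Cnorm_mul;
    replace (Wb*Wb*Wb) with (Wb*(Wb*Wb)) by ring; apply Rmult_le_compat; auto using Cnorm_ge0).
  pose proof (Rabs_pos al) as Hal.
  assert (Hin : Cnorm (Cadd (RtoC (a*a*a*a*(l-1) + al*l*(a*a))) (Cscal (-((a*a+al)*l)) (Cmul w w)))
     <= a*a*(2 + 2*Rabs al + 2*(Wb*Wb) + 2*Rabs al*(Wb*Wb))).
  { eapply Rle_trans; [apply Cnorm_add_le|]. rewrite Cnorm_RtoC, Cnorm_scal.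
    assert (A1 : Rabs (a*a*a*a*(l-1) + al*l*(a*a)) <= a*a*2 + Rabs al * 2 * (a*a)).
    { eapply Rle_trans; [apply Rabs_triang|]. rewrite Rabs_right by nra.
      rewrite !Rabs_mult, (Rabs_right l), (Rabs_right a) by lra.
      assert (a*a*a*a*(l-1) = (a*a)*((l-1)*(a*a))) by ring.
      assert ((a*a)*((l-1)*(a*a)) <= a*a*2) by (apply Rmult_le_compat_l; nra).
      assert (Rabs al * l * a * a <= Rabs al * 2 * (a*a)).
      { replace (Rabs al * l * a * a) with (Rabs al * (a*a) * l) by ring.
        replace (Rabs al * 2 * (a*a)) with (Rabs al * (a*a) * 2) by ring.
        apply Rmult_le_compat_l; nra. }
      lra. }
    assert (A2 : Rabs (-((a*a+al)*l)) <= (a*a + Rabs al*(a*a))*2).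
    { rewrite Rabs_Ropp, Rabs_mult, (Rabs_right l) by lra.
      assert (Rabs (a*a+al) <= a*a + Rabs al*(a*a)).
      { eapply Rle_trans; [apply Rabs_triang|]. rewrite Rabs_right by nra.
        assert (Rabs al <= Rabs al * (a*a)) by nra. lra. }
      apply Rmult_le_compat; auto using Rabs_pos; lra. }
    assert (Rabs (-((a*a+al)*l)) * Cnorm (Cmul w w) <= (a*a + Rabs al*(a*a))*2 * (Wb*Wb))
      by (apply Rmult_le_compat; auto using Rabs_pos, Cnorm_ge0).
    nra. }
  assert (/a * Cnorm (Cadd (RtoC (a*a*a*a*(l-1) + al*l*(a*a))) (Cscal (-((a*a+al)*l)) (Cmul w w)))
     <= /a * (a*a*(2 + 2*Rabs al + 2*(Wb*Wb) + 2*Rabs al*(Wb*Wb)))).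
  { apply Rmult_le_compat_l; [apply Rlt_le, Rinv_0_lt_compat; lra|exact Hin]. }
  replace (/a * (a*a*(2 + 2*Rabs al + 2*(Wb*Wb) + 2*Rabs al*(Wb*Wb)))) with
     (a*(2 + 2*Rabs al + 2*(Wb*Wb) + 2*Rabs al*(Wb*Wb))) in H0 by (field; lra).
  unfold C0c.
  assert (Wb*Wb*Wb <= Wb*Wb*Wb*a) by (assert (0 <= Wb*Wb*Wb) by nra; nra).
  nra.
Qed.

Lemma lam_bound w a om Wb : 0 < om -> om <= fst w -> Cnorm w <= Wb -> Wb <= a ->
  Cnorm (Csub (RtoC a) w) <= (1 - om/a/2) * Cnorm (Cadd (RtoC a) w).
Proof.
  intros Hom Hf Hw Ha.
  assert (Hwa : Cnorm w <= a) by lra.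
  pose proof (Cnorm_sq w) as Sw.
  assert (Hp : fst w <= Cnorm w) by (pose proof (fst_le_Cnorm w); pose proof (Rle_abs (fst w)); lra).
  assert (Ha0 : 0 < a) by lra.
  assert (Hx : om / a <= 1) by (apply Rmult_le_reg_r with a; [lra|]; field_simplify; lra).
  assert (Hx0 : 0 < om / a) by (apply Rdiv_lt_0_compat; lra).
  apply sq_le; [apply Cnorm_ge0| apply Rmult_le_pos; [lra|apply Cnorm_ge0]|].
  replace ((1 - om/a/2) * Cnorm (Cadd (RtoC a) w) * ((1 - om/a/2) * Cnorm (Cadd (RtoC a) w)))
    with ((1 - om/a/2)*(1 - om/a/2) * (Cnorm (Cadd (RtoC a) w) * Cnorm (Cadd (RtoC a) w))) by ring.
  rewrite !Cnorm_sq. destruct w as [p q]. unfold Csub, Cadd, Copp, RtoC in *; simpl in *.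
  set (x := om/a) in *.
  assert (Hxa : x * a = om) by (unfold x; field; lra).
  assert (Hs : a*a + (p*p+q*q) <= 2*(a*a)) by nra.
  assert (H1 : x * (a*a + (p*p+q*q) + 2*a*p) <= 4*a*p).
  { assert (x*(a*a + (p*p+q*q) + 2*a*p) <= x*(4*(a*a))) by (apply Rmult_le_compat_l; nra).
    assert (x*(4*(a*a)) = 4*a*om) by (rewrite <- Hxa; ring).
    assert (4*a*om <= 4*a*p) by nra. lra. }
  assert (0 <= x*x/4*((a + p)*(a+p) + q*q)) by (apply Rmult_le_pos; nra).
  nra.
Qed.

Lemma S1step al Wb om w a b r' rN :
  -1 < al -> 0 < om -> om <= fst w -> Cnorm w <= Wb -> 1 <= Wb -> 0 < a -> 0 < b -> a*a = b*b+1 ->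
  Wb <= a -> 2 <= a*a -> 4 * C0c al Wb <= a*a -> 8 * C0c al Wb <= om * a ->
  0 <= reW r' w -> DDf al w (a*a) r' <> (0,0) ->
  Cmul rN (DDf al w (a*a) r') = Csub (Cscal (a*a + al) r') (zz w) ->
  Cnorm (Csub (Cscal a rN) w) / Cnorm (Cadd (Cscal a rN) w) <=
  (1 - om/a/4) * (Cnorm (Csub (Cscal b r') w) / Cnorm (Cadd (Cscal b r') w)) + 2 * (C0c al Wb / (a*a)).
Proof.
  intros Hal Hom Hf Hw HWb Ha Hb Hab HaW Ha2 HC4 HC8 Hre HD HrN.
  assert (Ha1 : 1 <= a) by lra.
  set (D := DDf al w (a*a) r') in *.
  set (m := a*a + al) in *.
  set (X := Csub (Cscal m r') (zz w)) in *.
  set (num := Csub (Cscal a X) (Cmul w D)).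
  set (den := Cadd (Cscal a X) (Cmul w D)).
  set (p' := Csub (Cscal b r') w). set (q' := Cadd (Cscal b r') w).
  set (K := Cscal (m/b) (Csub (RtoC (a*a)) (Cmul w w))).
  set (S := a*a*a). set (w3 := Cmul w (Cmul w w)).
  assert (En : Cmul (Csub (Cscal a rN) w) D = num).
  { unfold num. rewrite <- HrN. ceq; ring. }
  assert (Ed : Cmul (Cadd (Cscal a rN) w) D = den).
  { unfold den. rewrite <- HrN. ceq; ring. }
  assert (In : Cmul (Cscal 2 (Cadd (RtoC a) w)) num =
     Cadd (Cmul (Cadd (Cadd K (RtoC S)) w3) p') (Cmul (Csub (Csub K (RtoC S)) w3) q')).
  { unfold num, X, D, DDf, zz, K, S, w3, p', q', m. destruct w as [p q], r' as [x y].
    ceq; field; lra. }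
  assert (Id : Cmul (Cscal 2 (Csub (RtoC a) w)) den =
     Cadd (Cmul (Cadd (Csub K (RtoC S)) w3) p') (Cmul (Csub (Cadd K (RtoC S)) w3) q')).
  { unfold den, X, D, DDf, zz, K, S, w3, p', q', m. destruct w as [p q], r' as [x y].
    ceq; field; lra. }
  pose proof (KS_bound al Wb w a b Ha Hb Hab Ha2 Ha1 ltac:(lra) Hw) as HKS.
  fold m K S w3 in HKS.
  set (E := C0c al Wb * a) in *.
  assert (HKS1 : Cnorm (Csub K (RtoC S)) + Cnorm w3 <= E) by exact HKS.
  assert (HPQ : Cnorm p' <= Cnorm q').
  { apply sq_le; auto using Cnorm_ge0. rewrite !Cnorm_sq. unfold p', q', reW in *.
    destruct w as [p q], r' as [x y]. unfold Csub, Cadd, Copp, Cscal; simpl in *.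
    assert (0 <= b * (x*p + y*q)) by (apply Rmult_le_pos; lra). nra. }
  assert (HQ : 0 < Cnorm q').
  { apply Cnorm_pos. intro E0. assert (Cnorm q' = 0) by (rewrite E0; unfold Cnorm; simpl; rewrite Rmult_0_l, Rplus_0_l; apply sqrt_0).
    pose proof (Cnorm_sq q'). rewrite H in H0. unfold q', reW in *.
    destruct w as [p q], r' as [x y]. unfold Csub, Cadd, Copp, Cscal in *; simpl in *.
    assert (0 <= b * (x*p + y*q)) by (apply Rmult_le_pos; lra). nra. }
  pose proof (Cnorm_ge0 p') as HP0.
  assert (Hn1 : 2 * Cnorm (Cadd (RtoC a) w) * Cnorm num <= (2*S + E) * Cnorm p' + E * Cnorm q').
  { assert (2 * Cnorm (Cadd (RtoC a) w) * Cnorm num = Cnorm (Cmul (Cscal 2 (Cadd (RtoC a) w)) num)) as ->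
      by (rewrite Cnorm_mul, Cnorm_scal, Rabs_right by lra; ring).
    rewrite In. eapply Rle_trans; [apply Cnorm_add_le|]. rewrite !Cnorm_mul.
    apply Rplus_le_compat; apply Rmult_le_compat; auto using Cnorm_ge0, Rle_refl.
    - replace (Cadd (Cadd K (RtoC S)) w3) with (Cadd (Cadd (RtoC (2*S)) (Csub K (RtoC S))) w3) by (ceq; ring).
      eapply Rle_trans; [apply Cnorm_add_le|]. eapply Rle_trans; [apply Rplus_le_compat_r, Cnorm_add_le|].
      rewrite Cnorm_RtoC, Rabs_right by (unfold S; apply Rle_ge; repeat apply Rmult_le_pos; lra). lra.
    - eapply Rle_trans; [apply Cnorm_sub_le|]. lra. }
  assert (Hn2 : (2*S - E) * Cnorm q' - E * Cnorm p' <= 2 * Cnorm (Csub (RtoC a) w) * Cnorm den).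
  { assert (2 * Cnorm (Csub (RtoC a) w) * Cnorm den = Cnorm (Cmul (Cscal 2 (Csub (RtoC a) w)) den)) as ->
      by (rewrite Cnorm_mul, Cnorm_scal, Rabs_right by lra; ring).
    rewrite Id.
    replace (Cadd (Cmul (Cadd (Csub K (RtoC S)) w3) p') (Cmul (Csub (Cadd K (RtoC S)) w3) q'))
      with (Cadd (Cmul (Csub (Cadd K (RtoC S)) w3) q') (Cmul (Cadd (Csub K (RtoC S)) w3) p')) by (ceq; ring).
    eapply Rle_trans; [|apply Cnorm_add_rev]. rewrite !Cnorm_mul.
    assert (A1 : 2*S - E <= Cnorm (Csub (Cadd K (RtoC S)) w3)).
    { replace (Csub (Cadd K (RtoC S)) w3) with (Csub (RtoC (2*S)) (Cadd (Csub (RtoC S) K) w3)) by (ceq; ring).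
      pose proof (Cnorm_sub_rev (RtoC (2*S)) (Cadd (Csub (RtoC S) K) w3)).
      rewrite Cnorm_RtoC, Rabs_right in H by (unfold S; apply Rle_ge; repeat apply Rmult_le_pos; lra).
      pose proof (Cnorm_add_le (Csub (RtoC S) K) w3).
      assert (Cnorm (Csub (RtoC S) K) = Cnorm (Csub K (RtoC S))) as E1.
      { replace (Csub (RtoC S) K) with (Copp (Csub K (RtoC S))) by (ceq; ring). apply Cnorm_opp. }
      lra. }
    assert (A2 : Cnorm (Cadd (Csub K (RtoC S)) w3) <= E).
    { eapply Rle_trans; [apply Cnorm_add_le|]. lra. }
    assert ((2*S - E) * Cnorm q' <= Cnorm (Csub (Cadd K (RtoC S)) w3) * Cnorm q')
      by (apply Rmult_le_compat_r; auto using Cnorm_ge0).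
    assert (Cnorm (Cadd (Csub K (RtoC S)) w3) * Cnorm p' <= E * Cnorm p')
      by (apply Rmult_le_compat_r; auto using Cnorm_ge0).
    lra. }
  pose proof (lam_bound w a om Wb Hom Hf Hw HaW) as Hlam.
  assert (HDn : 0 < Cnorm D) by (apply Cnorm_pos; auto).
  assert (Hrat : Cnorm (Csub (Cscal a rN) w) / Cnorm (Cadd (Cscal a rN) w) = Cnorm num / Cnorm den).
  { rewrite <- En, <- Ed, !Cnorm_mul. destruct (Req_dec (Cnorm (Cadd (Cscal a rN) w)) 0) as [Z|Z].
    - rewrite Z. rewrite Rmult_0_l. unfold Rdiv. rewrite !Rinv_0, !Rmult_0_r. reflexivity.
    - field. lra. }
  rewrite Hrat.
  assert (HS : 0 < S) by (unfold S; repeat apply Rmult_lt_0_compat; lra).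
  assert (HC0 : 0 <= C0c al Wb) by (unfold C0c; pose proof (Rabs_pos al); nra).
  assert (Ha1' : 0 < Cnorm (Cadd (RtoC a) w)).
  { assert (fst (Cadd (RtoC a) w) = a + fst w) as Ef by (unfold Cadd, RtoC; simpl; ring).
    pose proof (fst_le_Cnorm (Cadd (RtoC a) w)). pose proof (Rle_abs (fst (Cadd (RtoC a) w))). lra. }
  assert (G1 : E <= C0c al Wb / (a*a) * S) by (unfold E, S; apply Req_le; field; lra).
  assert (G2 : 0 <= C0c al Wb / (a*a)) by (unfold Rdiv; apply Rmult_le_pos; [lra| apply Rlt_le, Rinv_0_lt_compat; nra]).
  assert (G3 : C0c al Wb / (a*a) <= 1/4).
  { apply Rmult_le_reg_r with (a*a); [nra|]. replace (C0c al Wb / (a*a) * (a*a)) with (C0c al Wb) by (field; lra). lra. }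
  assert (G4 : 0 < om / a) by (apply Rdiv_lt_0_compat; lra).
  assert (G5 : om / a <= 1).
  { apply Rmult_le_reg_r with a; [lra|]. replace (om/a*a) with om by (field; lra).
    pose proof (fst_le_Cnorm w). pose proof (Rle_abs (fst w)). lra. }
  assert (G6 : C0c al Wb / (a*a) <= om/a/8).
  { apply Rmult_le_reg_r with (8*(a*a)); [nra|].
    replace (C0c al Wb / (a*a) * (8*(a*a))) with (8 * C0c al Wb) by (field; lra).
    replace (om/a/8*(8*(a*a))) with (om*a) by (field; lra). lra. }
  assert (G7 : 0 <= E) by (unfold E; nra).
  exact (ratio_final _ _ _ _ _ _ _ _ _ _ HQ HP0 HPQ Ha1' (Cnorm_ge0 _) (Cnorm_ge0 _) (Cnorm_ge0 _) HS G7 G1 G2 G3 G4 G5 G6 Hn1 Hn2 Hlam).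
Qed.

Lemma Rdiv_le_0_compat a b : 0 <= a -> 0 < b -> 0 <= a / b.
Proof. intros. unfold Rdiv. apply Rmult_le_pos; [lra|]. apply Rlt_le, Rinv_0_lt_compat; lra. Qed.

Lemma sqrt_INR_mono m n : (m <= n)%nat -> sqrt (INR m) <= sqrt (INR n).
Proof. intros H. apply sqrt_le_1_alt. apply le_INR; auto. Qed.

Lemma sqrt_sq_INR n : sqrt (INR n) * sqrt (INR n) = INR n.
Proof. apply sqrt_sqrt. apply pos_INR. Qed.

Lemma sqrt_le_self x : 1 <= x -> sqrt x <= x.
Proof.
  intros H. apply sq_le; [apply sqrt_pos|lra|]. rewrite sqrt_sqrt by lra. nra.
Qed.

Lemma sqrt_ge_of_sq x A : 0 <= x -> A*A <= x -> A <= sqrt x.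
Proof.
  intros Hx H. destruct (Rle_lt_dec A 0); [pose proof (sqrt_pos x); lra|].
  apply sq_le; [lra|apply sqrt_pos|]. rewrite sqrt_sqrt; lra.
Qed.

Lemma exists_big (A : R) : exists k : nat, A <= sqrt (INR k).
Proof.
  destruct (nat_arch (A*A)) as [k Hk]. exists k. apply sqrt_ge_of_sq; [apply pos_INR|lra].
Qed.

Lemma step_ab n : (1 <= n)%nat ->
  let a := sqrt (INR (S n)) in let b := sqrt (INR n) in
  0 < b /\ b < a /\ a * a = b * b + 1 /\ a - b <= / a /\ 1 <= b.
Proof.
  intros Hn a b.
  assert (Hb1 : 1 <= INR n) by (apply (le_INR 1); auto).
  assert (Ea : a * a = INR n + 1) by (unfold a; rewrite sqrt_sq_INR, S_INR; ring).
  assert (Eb : b * b = INR n) by (unfold b; apply sqrt_sq_INR).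
  assert (Hb0 : 0 <= b) by (unfold b; apply sqrt_pos).
  assert (Ha0 : 0 <= a) by (unfold a; apply sqrt_pos).
  assert (1 <= b) by nra.
  assert (b < a) by nra.
  repeat split; try lra.
  apply Rmult_le_reg_r with (a); [lra|]. rewrite Rinv_l by lra.
  assert ((a - b)*(a+b) = 1) by nra. nra.
Qed.

Lemma choose_N1 (N0 : nat) (A : R) : exists N : nat, (N0 <= N)%nat /\ (1 <= N)%nat /\
  forall n, (N <= n)%nat -> A <= sqrt (INR n).
Proof.
  destruct (exists_big A) as [k Hk].
  exists (Nat.max (Nat.max N0 k) 1). split; [lia|split; [lia|]].
  intros n Hn. eapply Rle_trans; [exact Hk|]. apply sqrt_INR_mono. lia.
Qed.

Lemma choose_N2 (N' : nat) (B : R) : (1 <= N')%nat -> exists N : nat, (N' <= N)%nat /\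
  forall n, (N <= n)%nat -> sqrt (INR N') + B <= sqrt (INR n).
Proof.
  intros HN. destruct (nat_arch B) as [j Hj].
  exists ((N' + j) * (N' + j))%nat. split; [nia|].
  intros n Hn.
  assert (Hs : sqrt (INR ((N' + j) * (N' + j))) = INR N' + INR j).
  { rewrite mult_INR, plus_INR. apply sqrt_square. pose proof (pos_INR N'); pose proof (pos_INR j); lra. }
  pose proof (sqrt_INR_mono _ _ Hn) as Hm. rewrite Hs in Hm.
  assert (sqrt (INR N') <= INR N') by (apply sqrt_le_self; apply (le_INR 1); auto).
  lra.
Qed.

Lemma iter1 (om C dl : R) (N0 : nat) : 0 < om -> 0 <= C -> 0 < dl -> dl <= 1 ->
  exists N1 : nat, (N0 <= N1)%nat /\ forall th : nat -> R,
  (forall n, (N0 <= n)%nat -> 0 <= th n <= 1) ->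
  (forall n, (N0 <= n)%nat -> th (S n) <= (1 - om / sqrt (INR (S n)) / 4) * th n + C / INR (S n)) ->
  forall n, (N1 <= n)%nat -> th n <= dl.
Proof.
  intros Hom HC Hd Hd1.
  destruct (choose_N1 N0 (8*C/(om*dl) + om)) as [N' [HN'0 [HN'1 HA]]].
  set (k := om*dl/8).
  assert (Hk : 0 < k) by (unfold k; nra).
  destruct (choose_N2 N' (1/k) HN'1) as [N1 [HN1 HB]].
  exists N1. split; [lia|]. intros th Hth Hst.
  set (s0 := sqrt (INR N')).
  assert (Inv : forall j, th (N' + j)%nat <= Rmax dl (1 - k * (sqrt (INR (N' + j)) - s0))).
  { induction j.
    - rewrite Nat.add_0_r. fold s0. replace (1 - k*(s0 - s0)) with 1 by ring.
      destruct (Hth N' HN'0). eapply Rle_trans; [|apply Rmax_r]. lra.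
    - rewrite Nat.add_succ_r.
      set (n := (N' + j)%nat) in *.
      assert (Hn1 : (1 <= n)%nat) by (unfold n; lia).
      destruct (step_ab n Hn1) as [Hb [Hba [Hab [Hamb Hb1]]]].
      set (a := sqrt (INR (S n))) in *. set (b := sqrt (INR n)) in *.
      assert (HaA : 8*C/(om*dl) + om <= a) by (apply HA; unfold n; lia).
      assert (Ha0 : 0 < a) by lra.
      pose proof (Hst n ltac:(unfold n; lia)) as Hs. fold a in Hs.
      replace (INR (S n)) with (a*a) in Hs by (unfold a; apply sqrt_sq_INR).
      destruct (Hth n ltac:(unfold n; lia)) as [Ht0 Ht1].
      set (x := om / a) in *.
      assert (Hx0 : 0 < x) by (unfold x; apply Rdiv_lt_0_compat; lra).
      assert (Hx4 : x <= 1) by (unfold x; apply Rmult_le_reg_r with a; [lra|]; field_simplify; [|lra];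
        assert (0 <= 8*C/(om*dl)) by (apply Rdiv_le_0_compat; nra); nra).
      assert (HCa : C / (a*a) <= x*dl/8).
      { unfold x. apply Rmult_le_reg_r with (8*(a*a)/dl); [apply Rdiv_lt_0_compat; nra|].
        replace (C / (a*a) * (8*(a*a)/dl)) with (8*C/dl) by (field; lra).
        replace (om / a * dl / 8 * (8 * (a*a) / dl)) with (om * a) by (field; lra).
        assert (8*C/(om*dl) <= a) by lra.
        apply Rmult_le_compat_l with (r := om) in H; [|lra].
        replace (om * (8*C/(om*dl))) with (8*C/dl) in H by (field; lra). lra. }
      assert (Hxa : x = om / a) by reflexivity.
      assert (Hka : k * (a - b) <= k / a) by (unfold Rdiv; apply Rmult_le_compat_l; lra).
      assert (Hkx : k / a = x * dl / 8) by (unfold k, x; field; lra).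
      clearbody x k a b s0.
      destruct (Rle_lt_dec dl (th n)) as [Hge|Hlt].
      + assert (th (S n) <= th n - x*dl/8).
        { assert ((1 - x/4) * th n <= th n - x*dl/4).
          { assert (x/4*dl <= x/4*th n) by (apply Rmult_le_compat_l; lra). nra. }
          lra. }
        apply Rmax_Rle in IHj. destruct IHj as [I1|I1].
        * eapply Rle_trans; [|apply Rmax_l]. assert (0 <= x*dl) by nra. lra.
        * eapply Rle_trans; [|apply Rmax_r]. lra.
      + assert (th (S n) <= dl).
        { assert ((1 - x/4) * th n <= (1 - x/4) * dl) by (apply Rmult_le_compat_l; lra). nra. }
        eapply Rle_trans; [exact H|]. apply Rmax_l. }
  intros n Hn.
  specialize (Inv (n - N')%nat). replace (N' + (n - N'))%nat with n in Inv by lia.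
  pose proof (HB n Hn) as HBn. fold s0 in HBn.
  assert (1 - k * (sqrt (INR n) - s0) <= 0).
  { assert (k * (1/k) <= k * (sqrt (INR n) - s0)) by (apply Rmult_le_compat_l; lra).
    replace (k * (1/k)) with 1 in H by (field; lra). lra. }
  unfold Rmax in Inv. destruct (Rle_dec dl (1 - k * (sqrt (INR n) - s0))); lra.
Qed.

Lemma cube_ratio a b : 0 < a -> 0 < b -> a*a = b*b + 1 -> 4 <= a*a ->
  a*a*a <= (1 + 5/(a*a)) * (b*b*b).
Proof.
  intros Ha0 Hb Hab Ha.
  apply sq_le; [nra| apply Rmult_le_pos; [apply Rplus_le_le_0_compat; [lra|apply Rdiv_le_0_compat; nra]|nra]|].
  replace (a*a*a*(a*a*a)) with ((a*a)*(a*a)*(a*a)) by ring.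
  set (s := a*a). assert (Hbb : b*b = s - 1) by (unfold s; lra).
  replace ((1 + 5/s) * (b*b*b) * ((1 + 5/s) * (b*b*b))) with ((s+5)*(s+5)*((b*b)*(b*b)*(b*b))/(s*s)) by (field; unfold s; nra).
  assert (Hs4 : 4 <= s) by (unfold s; lra). clearbody s.
  rewrite Hbb. apply Rmult_le_reg_r with (s*s); [nra|].
  replace ((s + 5) * (s + 5) * ((s - 1) * (s - 1) * (s - 1)) / (s * s) * (s * s)) with ((s + 5) * (s + 5) * ((s - 1) * (s - 1) * (s - 1))) by (field; nra).
  assert (0 <= s*s*(7*s*s - 2*s - 46)) by (apply Rmult_le_pos; nra).
  assert ((s + 5) * (s + 5) * ((s - 1) * (s - 1) * (s - 1)) - s*s*s*(s*s) = s*s*(7*s*s - 2*s - 46) + (65*s - 25)) by ring.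
  lra.
Qed.

Lemma iter2 (om C1 eta : R) (N0 : nat) : 0 < om -> 0 < C1 -> 0 < eta ->
  exists N2 M, forall E : nat -> R, (forall n, 0 <= E n) ->
  (forall n, (N0 <= n)%nat -> E n <= eta / sqrt (INR n)) ->
  (forall n, (N0 <= n)%nat -> E (S n) <= (1 - om / sqrt (INR (S n)) / 2) * E n + C1 / (INR (S n) * INR (S n))) ->
  forall n, (N2 <= n)%nat -> E n <= M / (INR n * sqrt (INR n)).
Proof.
  intros Hom HC1 Heta.
  destruct (choose_N1 N0 (20/om + om + 2)) as [N' [HN'0 [HN'1 HA]]].
  set (s0 := sqrt (INR N')).
  set (Y0 := eta * INR N').
  set (T := 8*C1/om).
  assert (HT : 0 < T) by (unfold T; apply Rdiv_lt_0_compat; lra).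
  destruct (choose_N2 N' (Y0/C1) HN'1) as [N2 [HN2 HB]].
  exists N2, T. intros E HE0 HEb Hst.
  set (y := fun n => E n * (sqrt (INR n) * sqrt (INR n) * sqrt (INR n))).
  assert (Inv : forall j, y (N' + j)%nat <= Rmax T (Y0 - C1 * (sqrt (INR (N' + j)) - s0))).
  { induction j.
    - rewrite Nat.add_0_r. fold s0. replace (Y0 - C1*(s0 - s0)) with Y0 by ring.
      eapply Rle_trans; [|apply Rmax_r]. unfold y. fold s0.
      assert (Hs0 : 1 <= s0) by (unfold s0; apply sqrt_ge_of_sq; [apply pos_INR|]; replace (1*1) with (INR 1) by (simpl; ring); apply le_INR; auto).
      pose proof (HEb N' HN'0) as H. fold s0 in H.
      assert (E N' * (s0*s0*s0) <= eta / s0 * (s0*s0*s0)) by (apply Rmult_le_compat_r; [nra|exact H]).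
      replace (eta / s0 * (s0*s0*s0)) with (eta * (s0*s0)) in H0 by (field; lra).
      replace (eta*(s0*s0)) with Y0 in H0 by (unfold Y0, s0; rewrite sqrt_sq_INR; ring). exact H0.
    - rewrite Nat.add_succ_r.
      set (n := (N' + j)%nat) in *.
      assert (Hn1 : (1 <= n)%nat) by (unfold n; lia).
      destruct (step_ab n Hn1) as [Hb [Hba [Hab [Hamb Hb1]]]].
      assert (HaA : 20/om + om + 2 <= sqrt (INR (S n))) by (apply HA; unfold n; lia).
      pose proof (Hst n ltac:(unfold n; lia)) as Hs.
      unfold y in IHj |- *.
      set (a := sqrt (INR (S n))) in *. set (b := sqrt (INR n)) in *.
      replace (INR (S n)) with (a*a) in Hs by (unfold a; apply sqrt_sq_INR).
      pose proof (HE0 n) as HEn. pose proof (HE0 (S n)) as HESn.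
      set (yn := E n * (b*b*b)) in *. clearbody a b s0.
      assert (Ha0 : 0 < a) by lra.
      assert (Hom20 : 0 < 20/om) by (apply Rdiv_lt_0_compat; lra).
      assert (Ha4 : 4 <= a*a) by nra.
      pose proof (cube_ratio a b Ha0 Hb Hab Ha4) as Hcr.
      assert (Hyn : 0 <= yn) by (unfold yn; apply Rmult_le_pos; [lra|]; repeat apply Rmult_le_pos; lra).
      set (z := om / a).
      assert (Hz0 : 0 < z) by (unfold z; apply Rdiv_lt_0_compat; lra).
      assert (Hz1 : z <= 1) by (unfold z; apply Rmult_le_reg_r with a; [lra|]; field_simplify; lra).
      assert (H5 : 5 / (a*a) <= z / 4).
      { unfold z. apply Rmult_le_reg_r with (4*(a*a)); [nra|].
        replace (5 / (a*a) * (4*(a*a))) with 20 by (field; lra).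
        replace (om / a / 4 * (4*(a*a))) with (om * a) by (field; lra).
        assert (H20 : 20/om <= a) by lra. apply Rmult_le_compat_l with (r := om) in H20; [|lra].
        replace (om * (20/om)) with 20 in H20 by (field; lra). lra. }
      assert (Hstep : E (S n) * (a*a*a) <= (1 - z/4) * yn + C1 / a).
      { assert (E (S n) * (a*a*a) <= ((1 - z/2) * E n + C1 / (a*a*(a*a))) * (a*a*a))
          by (apply Rmult_le_compat_r; [nra|exact Hs]).
        replace (((1 - z/2) * E n + C1 / (a*a*(a*a))) * (a*a*a)) with ((1 - z/2) * (E n * (a*a*a)) + C1/a) in H by (unfold z; field; lra).
        assert (E n * (a*a*a) <= (1 + 5/(a*a)) * yn).
        { unfold yn. replace ((1 + 5/(a*a)) * (E n * (b*b*b))) with (E n * ((1 + 5/(a*a)) * (b*b*b))) by ring.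
          apply Rmult_le_compat_l; lra. }
        assert ((1 - z/2) * (E n * (a*a*a)) <= (1 - z/2) * ((1 + 5/(a*a)) * yn)) by (apply Rmult_le_compat_l; lra).
        assert ((1 - z/2) * ((1 + 5/(a*a)) * yn) <= (1 - z/4) * yn).
        { rewrite <- Rmult_assoc. apply Rmult_le_compat_r; [lra|].
          assert (0 <= z/2 * (5/(a*a))) by (apply Rmult_le_pos; [lra| apply Rdiv_le_0_compat; nra]). nra. }
        lra. }
      assert (HzT : z/4 * T = 2 * (C1/a)) by (unfold z, T; field; lra).
      assert (HkC : C1 * (a - b) <= C1 / a) by (unfold Rdiv; apply Rmult_le_compat_l; lra).
      assert (HCa : 0 <= C1 / a) by (apply Rdiv_le_0_compat; lra).
      clearbody z T.
      destruct (Rle_lt_dec T yn) as [Hge|Hlt].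
      + assert (z/4 * T <= z/4 * yn) by (apply Rmult_le_compat_l; lra).
        assert (E (S n) * (a*a*a) <= yn - C1/a) by nra.
        apply Rmax_Rle in IHj. destruct IHj as [I1|I1].
        * eapply Rle_trans; [|apply Rmax_l]. lra.
        * eapply Rle_trans; [|apply Rmax_r]. lra.
      + eapply Rle_trans; [|apply Rmax_l].
        assert ((1 - z/4) * yn <= (1 - z/4) * T) by (apply Rmult_le_compat_l; lra). nra. }
  intros n Hn.
  assert (HnN : (N' <= n)%nat) by lia.
  specialize (Inv (n - N')%nat). replace (N' + (n - N'))%nat with n in Inv by lia.
  pose proof (HB n Hn) as HBn. fold s0 in HBn.
  assert (Y0 - C1 * (sqrt (INR n) - s0) <= 0).
  { assert (C1 * (Y0/C1) <= C1 * (sqrt (INR n) - s0)) by (apply Rmult_le_compat_l; lra).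
    replace (C1 * (Y0/C1)) with Y0 in H by (field; lra). lra. }
  assert (Hy : y n <= T).
  { apply Rmax_Rle in Inv. destruct Inv; lra. }
  unfold y in Hy.
  assert (Hsn : 1 <= sqrt (INR n)).
  { apply sqrt_ge_of_sq; [apply pos_INR|]. replace (1*1) with (INR 1) by (simpl; ring). apply le_INR. lia. }
  replace (INR n * sqrt (INR n)) with (sqrt (INR n) * sqrt (INR n) * sqrt (INR n)) by (rewrite sqrt_sq_INR; ring).
  apply Rmult_le_reg_r with (sqrt (INR n) * sqrt (INR n) * sqrt (INR n)); [nra|].
  replace (T / (sqrt (INR n) * sqrt (INR n) * sqrt (INR n)) * (sqrt (INR n) * sqrt (INR n) * sqrt (INR n))) with T by (field; lra).
  exact Hy.
Qed.

Lemma w_props z R d : Cnorm z <= R -> d <= Cnorm z - fst z -> 0 < d -> 0 < R ->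
  Cmul (Csqrt (Copp z)) (Csqrt (Copp z)) = Copp z /\ sqrt (d/2) <= fst (Csqrt (Copp z)) /\
  Cnorm (Csqrt (Copp z)) <= R + 1 /\ zz (Csqrt (Copp z)) = z.
Proof.
  intros HR Hd Hd0 HR0.
  pose proof (Csqrt_sq (Copp z)) as Hsq.
  split; [exact Hsq|]. split; [|split].
  - rewrite Csqrt_fst, Cnorm_opp. apply sqrt_le_1_alt. unfold Copp; simpl. lra.
  - pose proof (Cnorm_Csqrt_sq (Copp z)) as E. rewrite Cnorm_opp in E.
    apply sq_le; [apply Cnorm_ge0|lra|]. pose proof (Cnorm_ge0 z). nra.
  - unfold zz. rewrite Hsq. apply Copp_Copp.
Qed.

Lemma theta_to_E al w Wb cb a r dl : 0 < a -> 0 <= dl -> dl <= 1/2 -> Cnorm w <= Wb -> Cnorm (cc al w) <= cb ->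
  Cnorm (Csub (Cscal a r) w) <= dl * Cnorm (Cadd (Cscal a r) w) ->
  Cnorm (Csub r (tgt al w (/a))) <= 4*dl*Wb*(/a) + cb*(/a*/a).
Proof.
  intros Ha Hd Hd2 Hw Hc H.
  set (X := Csub (Cscal a r) w) in *.
  assert (Cadd (Cscal a r) w = Cadd X (Cscal 2 w)) as E1 by (unfold X; ceq; ring).
  rewrite E1 in H. pose proof (Cnorm_add_le X (Cscal 2 w)). rewrite Cnorm_scal, Rabs_right in H0 by lra.
  pose proof (Cnorm_ge0 X). pose proof (Cnorm_ge0 w).
  assert (HX : Cnorm X <= 4*dl*Wb).
  { assert (Cnorm X <= dl * (Cnorm X + 2 * Cnorm w)) by (eapply Rle_trans; [exact H|]; apply Rmult_le_compat_l; lra).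
    assert (Cnorm X * (1 - dl) <= 2*dl*Wb) by nra.
    assert (Cnorm X * (1/2) <= Cnorm X * (1 - dl)) by (apply Rmult_le_compat_l; lra). nra. }
  assert (Csub r (tgt al w (/a)) = Csub (Cscal (/a) X) (Cscal (/a*/a) (cc al w))) as E2.
  { unfold X, tgt. ceq; field; lra. }
  rewrite E2. eapply Rle_trans; [apply Cnorm_sub_le|]. rewrite !Cnorm_scal.
  assert (Hia : 0 < /a) by (apply Rinv_0_lt_compat; lra).
  rewrite !Rabs_right by nra.
  assert (/a * Cnorm X <= /a * (4*dl*Wb)) by (apply Rmult_le_compat_l; lra).
  assert (/a*/a * Cnorm (cc al w) <= /a*/a*cb) by (apply Rmult_le_compat_l; nra).
  nra.
Qed.

Lemma theta_01 b w r : 0 < b -> 0 < fst w -> 0 <= reW r w ->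
  0 < Cnorm (Cadd (Cscal b r) w) /\ Cnorm (Csub (Cscal b r) w) <= Cnorm (Cadd (Cscal b r) w).
Proof.
  intros Hb Hw Hre. split.
  - apply Cnorm_pos. intro E0.
    pose proof (f_equal fst E0) as E1. simpl in E1.
    unfold reW in Hre. destruct w as [p q], r as [x y]. unfold Cadd, Cscal in *; simpl in *.
    pose proof (f_equal snd E0) as E2. simpl in E2.
    assert (0 <= b*(x*p + y*q)) by (apply Rmult_le_pos; lra). nra.
  - apply sq_le; auto using Cnorm_ge0. rewrite !Cnorm_sq. unfold reW in *.
    destruct w as [p q], r as [x y]. unfold Csub, Cadd, Copp, Cscal; simpl in *.
    assert (0 <= b * (x*p + y*q)) by (apply Rmult_le_pos; lra). nra.
Qed.

Lemma thr (X om a : R) : 0 < om -> 0 < a -> X / om <= a -> X * / a <= om.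
Proof.
  intros Hom Ha H. apply Rmult_le_reg_r with a; [lra|].
  replace (X * /a * a) with X by (field; lra).
  apply Rmult_le_compat_l with (r := om) in H; [|lra].
  replace (om * (X/om)) with X in H by (field; lra). lra.
Qed.

Theorem mainTheorem6 (alpha : R) (halpha : -1 < alpha) (K : Cpx -> Prop)
  (hKsub : forall z, K z -> slit_plane z) (hK : Ccompact K) :
  exists (M : R) (N : nat), forall n : nat, (1 <= n)%nat -> (N <= n)%nat ->
    forall z, K z ->
      Cnorm (Csub (Cdiv (Laguerre n alpha z) (Laguerre n (alpha + 1) z))
                  (Cadd (Csqrt (Cscal (/ INR n) (Copp z)))
                        (Cscal (/ INR n) (Cadd (RtoC (alpha / 2 + 1 / 4)) (Cscal (1 / 2) z)))))
      <= M / (INR n * sqrt (INR n)).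
Proof.
  destruct (compact_bounds K hKsub hK) as [R [d [HR [Hd HKb]]]].
  set (Wb := R + 1).
  set (om := Rmin (sqrt (d/2)) 1).
  assert (Hom : 0 < om) by (unfold om; apply Rmin_glb_lt; [apply sqrt_lt_R0|]; lra).
  assert (Hom1 : om <= 1) by (unfold om; apply Rmin_r).
  assert (HWb : 1 <= Wb) by (unfold Wb; lra).
  set (cb := Rabs alpha + 1 + Wb*Wb).
  assert (Hcb : 1 <= cb) by (unfold cb; pose proof (Rabs_pos alpha); nra).
  set (C0 := C0c alpha Wb). set (C1 := C1c alpha Wb).
  assert (HC0 : 0 <= C0) by (unfold C0, C0c; pose proof (Rabs_pos alpha); nra).
  assert (HC1 : 0 < C1).
  { unfold C1, C1c; cbv zeta. pose proof (Rabs_pos alpha).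
    assert (0 <= 3 * (Rabs alpha + 1 + Wb * Wb)) by nra.
    assert (0 <= Rabs alpha * Wb) by nra.
    assert (0 <= 4 * Rabs alpha * (Rabs alpha + 1 + Wb * Wb)) by nra.
    assert (0 <= Wb*Wb*(Rabs alpha + 1 + Wb * Wb)) by nra.
    assert (0 <= Rabs alpha * (2 * (Wb + (Rabs alpha + 1 + Wb * Wb)) * (Wb + (Rabs alpha + 1 + Wb * Wb)))) by nra.
    assert (0 <= 3 * (Wb * (Rabs alpha + 1 + Wb * Wb))) by nra.
    assert (0 <= Wb * (Rabs alpha + 1 + Wb * Wb)) by nra.
    assert (0 <= 4 * ((Rabs alpha + 1 + Wb * Wb) * (Rabs alpha + 1 + Wb * Wb))) by nra.
    nra. }
  set (t1 := 8*C0/om). set (t2 := 4*(Wb*Wb)/om). set (t3 := 8*cb/om).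
  set (t4 := 2*(2*cb + (Wb+cb)*(Wb+cb))/om). set (t5 := 2*(Rabs alpha + Wb*Wb + om*om/8)/om).
  assert (Ht : 0 <= t1 /\ 0 <= t2 /\ 0 <= t3 /\ 0 <= t4 /\ 0 <= t5).
  { unfold t1, t2, t3, t4, t5. pose proof (Rabs_pos alpha).
    repeat split; apply Rdiv_le_0_compat; nra. }
  destruct Ht as [Ht1 [Ht2 [Ht3 [Ht4 Ht5]]]].
  set (Abig := Wb + 2 + 4*C0 + t1 + t2 + t3 + t4 + t5).
  destruct (choose_N1 1 Abig) as [Nb [_ [HNb1 HNbA]]].
  set (dl := om / (32*Wb)).
  assert (Hdl : 0 < dl) by (unfold dl; apply Rdiv_lt_0_compat; lra).
  assert (Hdl1 : dl <= 1).
  { unfold dl. apply Rmult_le_reg_r with (32*Wb); [lra|]. replace (om/(32*Wb)*(32*Wb)) with om by (field; lra). lra. }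
  destruct (iter1 om (2*C0) dl Nb Hom ltac:(lra) Hdl Hdl1) as [N1 [HN1 Hit1]].
  destruct (iter2 om C1 (om/4) N1 Hom HC1 ltac:(lra)) as [N2 [M Hit2]].
  exists M, N2. intros n Hn1 HnN z Hz.
  destruct (HKb z Hz) as [HzR Hzd].
  destruct (w_props z R d HzR Hzd Hd HR) as [Hww [Hfw [Hnw Hzz]]].
  remember (Csqrt (Copp z)) as w eqn:Hwdef. fold Wb in Hnw.
  assert (Hfw' : om <= fst w) by (unfold om; pose proof (Rmin_l (sqrt (d/2)) 1); lra).
  assert (Hfw0 : 0 < fst w) by lra.
  pose proof (lag_seq alpha z w halpha Hww Hfw0) as LS.
  set (r := rr alpha z) in *.
  assert (HDD : forall k, Dn alpha z k = DDf alpha w (INR (S k)) (r k)).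
  { intro k. unfold Dn, DDf. rewrite Hzz. reflexivity. }
  assert (THR : forall k, (Nb <= k)%nat ->
     let a := sqrt (INR k) in
     Wb <= a /\ 2 <= a*a /\ 4*C0 <= a*a /\ 8*C0 <= om*a /\ /a <= 1/2 /\
     Wb*Wb*(/a) <= om/4 /\ 8*cb*(/a) <= om /\ (2*cb + (Wb+cb)*(Wb+cb))*(/a) <= om/2 /\
     2*(Rabs alpha + Wb*Wb + om*om/8)*(/a) <= om /\ 0 < a).
  { intros k Hk a. pose proof (HNbA k Hk) as HA. fold a in HA.
    assert (Ha0 : 0 < a) by (unfold Abig in HA; lra).
    assert (Ha2 : 2 <= a) by (unfold Abig in HA; lra).
    repeat split.
    - unfold Abig in HA; lra.
    - nra.
    - assert (4*C0 <= a) by (unfold Abig in HA; lra). nra.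
    - assert (t1 <= a) by (unfold Abig in HA; lra). unfold t1 in H.
      apply Rmult_le_compat_l with (r := om) in H; [|lra]. replace (om * (8*C0/om)) with (8*C0) in H by (field; lra). lra.
    - apply Rmult_le_reg_r with a; [lra|]. rewrite Rinv_l by lra. lra.
    - assert (t2 <= a) by (unfold Abig in HA; lra). unfold t2 in H.
      pose proof (thr _ _ _ Hom Ha0 H). lra.
    - assert (t3 <= a) by (unfold Abig in HA; lra). unfold t3 in H. exact (thr _ _ _ Hom Ha0 H).
    - assert (t4 <= a) by (unfold Abig in HA; lra). unfold t4 in H.
      pose proof (thr _ _ _ Hom Ha0 H). lra.
    - assert (t5 <= a) by (unfold Abig in HA; lra). unfold t5 in H. exact (thr _ _ _ Hom Ha0 H).
    - exact Ha0. }
  set (th := fun k => Cnorm (Csub (Cscal (sqrt (INR k)) (r k)) w) / Cnorm (Cadd (Cscal (sqrt (INR k)) (r k)) w)).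
  assert (Hth01 : forall k, (Nb <= k)%nat -> 0 <= th k <= 1).
  { intros k Hk. destruct (LS k) as [_ [Hre _]].
    destruct (THR k Hk) as [_ [_ [_ [_ [_ [_ [_ [_ [_ Ha0]]]]]]]]].
    destruct (theta_01 (sqrt (INR k)) w (r k) Ha0 Hfw0 Hre) as [HQ HPQ].
    unfold th. split.
    - apply Rdiv_le_0_compat; auto using Cnorm_ge0.
    - apply Rmult_le_reg_r with (Cnorm (Cadd (Cscal (sqrt (INR k)) (r k)) w)); [exact HQ|].
      unfold Rdiv. rewrite Rmult_assoc, Rinv_l by lra. lra. }
  assert (Hst1 : forall k, (Nb <= k)%nat ->
     th (S k) <= (1 - om / sqrt (INR (S k)) / 4) * th k + 2*C0 / INR (S k)).
  { intros k Hk.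
    destruct (THR (S k) ltac:(lia)) as [HWa [Ha2 [HC4 [HC8 [_ [_ [_ [_ [_ Ha0]]]]]]]]].
    destruct (step_ab k ltac:(lia)) as [Hb [Hba [Hab [Hamb Hb1]]]].
    destruct (LS k) as [_ [Hre [HDk Hrec]]].
    rewrite HDD in HDk, Hrec. rewrite <- Hzz in Hrec.
    assert (Eaa : INR (S k) = sqrt (INR (S k)) * sqrt (INR (S k))) by (symmetry; apply sqrt_sq_INR).
    rewrite Eaa in HDk, Hrec.
    pose proof (S1step alpha Wb om w (sqrt (INR (S k))) (sqrt (INR k)) (r k) (r (S k))
       halpha Hom Hfw' Hnw HWb Ha0 Hb Hab HWa Ha2 HC4 HC8 Hre HDk Hrec) as H1.
    unfold th. fold C0 in H1.
    replace (2*C0 / INR (S k)) with (2 * (C0 / (sqrt (INR (S k)) * sqrt (INR (S k))))) by (rewrite <- Eaa; field; apply not_0_INR; lia).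
    exact H1. }
  pose proof (Hit1 th Hth01 Hst1) as Hdl_all.
  set (Ef := fun k => Cnorm (Csub (r k) (tgt alpha w (/ sqrt (INR k))))).
  assert (HE0 : forall k, 0 <= Ef k) by (intro k; apply Cnorm_ge0).
  assert (HEb : forall k, (N1 <= k)%nat -> Ef k <= (om/4) / sqrt (INR k)).
  { intros k Hk. pose proof (Hdl_all k Hk) as Hthk.
    destruct (LS k) as [_ [Hre _]].
    destruct (THR k ltac:(lia)) as [_ [_ [_ [_ [_ [_ [H8 [_ [_ Ha0]]]]]]]]].
    destruct (theta_01 (sqrt (INR k)) w (r k) Ha0 Hfw0 Hre) as [HQ HPQ].
    unfold th in Hthk.
    assert (HP : Cnorm (Csub (Cscal (sqrt (INR k)) (r k)) w) <= dl * Cnorm (Cadd (Cscal (sqrt (INR k)) (r k)) w)).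
    { apply Rmult_le_compat_r with (r := Cnorm (Cadd (Cscal (sqrt (INR k)) (r k)) w)) in Hthk; [|lra].
      unfold Rdiv in Hthk. rewrite Rmult_assoc, Rinv_l in Hthk by lra. lra. }
    assert (Hdl2 : dl <= 1/2).
    { unfold dl. apply Rmult_le_reg_r with (32*Wb); [lra|]. replace (om/(32*Wb)*(32*Wb)) with om by (field; lra). lra. }
    pose proof (theta_to_E alpha w Wb cb (sqrt (INR k)) (r k) dl Ha0 ltac:(lra) Hdl2 Hnw (norm_cc alpha w Wb Hnw) HP) as HE.
    unfold Ef. eapply Rle_trans; [exact HE|].
    assert (4*dl*Wb = om/8) by (unfold dl; field; lra).
    assert (Hia : 0 < / sqrt (INR k)) by (apply Rinv_0_lt_compat; lra).
    assert (cb * (/ sqrt (INR k) * / sqrt (INR k)) <= om/8 * / sqrt (INR k)).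
    { rewrite <- Rmult_assoc. apply Rmult_le_compat_r; lra. }
    unfold Rdiv at 2. nra. }
  assert (Hst2 : forall k, (N1 <= k)%nat ->
     Ef (S k) <= (1 - om / sqrt (INR (S k)) / 2) * Ef k + C1 / (INR (S k) * INR (S k))).
  { intros k Hk.
    destruct (THR (S k) ltac:(lia)) as [_ [_ [_ [_ [Hu1 [Hu2 [Hu3 [Hu4 [Hu5 Ha0]]]]]]]]].
    destruct (step_ab k ltac:(lia)) as [Hb [Hba [Hab [Hamb Hb1]]]].
    destruct (LS k) as [_ [Hre [HDk Hrec]]].
    rewrite HDD in Hrec. rewrite <- Hzz in Hrec.
    assert (Eaa : INR (S k) = sqrt (INR (S k)) * sqrt (INR (S k))) by (symmetry; apply sqrt_sq_INR).
    rewrite Eaa in Hrec.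
    assert (He' : Cnorm (Csub (r k) (tgt alpha w (/ sqrt (INR k)))) <= (om/4) * / sqrt (INR k)).
    { pose proof (HEb k Hk). unfold Ef in H. exact H. }
    pose proof (S2step alpha Wb om w (sqrt (INR (S k))) (sqrt (INR k)) (r k) (r (S k))
       halpha Hom Hfw' Hnw HWb Ha0 Hb Hab Hu1 Hu2 Hu3 Hu4 Hu5 Hrec He') as H2.
    unfold Ef. fold C1 in H2. cbv zeta in H2.
    replace (C1 / (INR (S k) * INR (S k))) with
      (C1 * (/ sqrt (INR (S k)) * / sqrt (INR (S k)) * / sqrt (INR (S k)) * / sqrt (INR (S k)))).
    2:{ assert (Hsa : sqrt (INR (S k)) * sqrt (INR (S k)) = INR (S k)) by apply sqrt_sq_INR.
        revert Hsa Ha0. generalize (sqrt (INR (S k))). intros sa Hsa Ha0'. rewrite <- Hsa.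
        clearbody C1. field. lra. }
    exact H2. }
  pose proof (Hit2 Ef HE0 HEb Hst2 n HnN) as Hfin.
  unfold Ef in Hfin.
  assert (Hn0 : 0 < INR n) by (apply lt_0_INR; lia).
  assert (Htgt : Cadd (Csqrt (Cscal (/ INR n) (Copp z)))
                      (Cscal (/ INR n) (Cadd (RtoC (alpha / 2 + 1 / 4)) (Cscal (1 / 2) z)))
                 = tgt alpha w (/ sqrt (INR n))).
  { rewrite Csqrt_scal by (apply Rinv_0_lt_compat; lra).
    rewrite <- Hwdef, sqrt_inv. unfold tgt, cc. rewrite Hzz.
    replace (/ sqrt (INR n) * / sqrt (INR n)) with (/ INR n).
    - reflexivity.
    - rewrite <- Rinv_mult, sqrt_sq_INR. reflexivity. }
  rewrite Htgt. exact Hfin.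
Qed.
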